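(* Let $f \in \mathcal{C}_{2\pi}$, let $A_n[f]$ be the Toeplitz matrix generated by $f$ and $c_n[f]$ the optimal circulant preconditioner for $A_n[f]$. For every $\epsilon>0$ there exist positive integers $N$ and $M$ such that for every $n>N$ there are matrices $\mathscr R_n[f],\mathscr E_n[f]\in\mathbb{C}^{n\times n}$ with \[ \cos c_n[f]-\cos A_n[f] = \mathscr R_n[f]+\mathscr E_n[f],\qquad \operatorname{rank}\mathscr R_n[f]\le 2M,\qquad \|\mathscr E_n[f]\|_2\le\epsilon. \]
   Context: $\mathcal{C}_{2\pi}$ denotes the Banach space of all $2\pi$-periodic continuous complex-valued functions on $\mathbb{R}$ with the supremum norm $\|\cdot\|_\infty$. For $f\in\mathcal{C}_{2\pi}$ its Fourier coefficients are $a_k=\frac{1}{2\pi}\int_{-\pi}^{\pi} f(\theta)e^{-\mathbf{i}k\theta}\,d\theta$, $k\in\mathbb{Z}$. The Toeplitz matrix generated by $f$ is the $n\times n$ matrix $A_n[f]$ whose $(j,k)$ entry is $a_{j-k}$. The optimal circulant preconditioner $c_n[f]$ is the $n\times n$ circulant matrix whose $(j,k)$ entry is $c_{(j-k)\bmod n}$, where $c_k=\frac{(n-k)a_k+k\,a_{k-n}}{n}$ for $0\le k<n$. For a square matrix $X$, $\cos X=\sum_{m\ge0}\frac{(-1)^m}{(2m)!}X^{2m}$. $\|\cdot\|_2$ is the spectral norm. *)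

(* Defs.v *)
From Stdlib Require Import Reals Lra ZArith Classical ClassicalEpsilon.
Open Scope R_scope.

Definition Cpx := (R * R)%type.
Definition C0 : Cpx := (0, 0).
Definition C1 : Cpx := (1, 0).
Definition Cadd (z w : Cpx) : Cpx := (fst z + fst w, snd z + snd w).
Definition Copp (z : Cpx) : Cpx := (- fst z, - snd z).
Definition Csub (z w : Cpx) : Cpx := Cadd z (Copp w).
Definition Cmul (z w : Cpx) : Cpx :=
  (fst z * fst w - snd z * snd w, fst z * snd w + snd z * fst w).
Definition Cscale (r : R) (z : Cpx) : Cpx := (r * fst z, r * snd z).
Definition Cmod2 (z : Cpx) : R := fst z * fst z + snd z * snd z.

Fixpoint Csum (n : nat) (g : nat -> Cpx) : Cpx :=
  match n with O => C0 | S m => Cadd (Csum m g) (g m) end.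
Fixpoint Rsumn (n : nat) (g : nat -> R) : R :=
  match n with O => 0 | S m => Rsumn m g + g m end.

Definition in_C2pi (f : R -> Cpx) : Prop :=
  continuity (fun t => fst (f t)) /\ continuity (fun t => snd (f t)) /\
  (forall t, f (t + 2 * PI) = f t).

(* Riemann integral of a real function (0 if not integrable; continuous
   functions are integrable, and RiemannInt does not depend on the proof). *)
Definition Rint (g : R -> R) (a b : R) : R :=
  match excluded_middle_informative (exists p : Riemann_integrable g a b, True) with
  | left H => RiemannInt (proj1_sig (constructive_indefinite_description _ H))
  | right _ => 0
  end.

(* a_k = 1/(2 pi) int_{-pi}^{pi} f(t) e^{-ikt} dt *)
Definition fourier (f : R -> Cpx) (k : Z) : Cpx :=
  let kr := IZR k in
  (Rint (fun t => fst (f t) * cos (kr * t) + snd (f t) * sin (kr * t)) (- PI) PI / (2 * PI),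
   Rint (fun t => snd (f t) * cos (kr * t) - fst (f t) * sin (kr * t)) (- PI) PI / (2 * PI)).

(* ---------- n x n matrices: entries (j,k) with j,k < n (0-based) ---------- *)
Definition mat := nat -> nat -> Cpx.

Definition toeplitz (n : nat) (f : R -> Cpx) : mat :=
  fun j k => fourier f (Z.of_nat j - Z.of_nat k).

Definition circ_coef (n : nat) (f : R -> Cpx) (k : nat) : Cpx :=
  Cscale (1 / INR n)
    (Cadd (Cscale (INR (n - k)) (fourier f (Z.of_nat k)))
          (Cscale (INR k) (fourier f (Z.of_nat k - Z.of_nat n)))).

Definition opt_circ (n : nat) (f : R -> Cpx) : mat :=
  fun j k => circ_coef n f (Z.to_nat (Z.modulo (Z.of_nat j - Z.of_nat k) (Z.of_nat n))).

Definition mmul (n : nat) (X Y : mat) : mat :=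
  fun i j => Csum n (fun l => Cmul (X i l) (Y l j)).
Definition mid : mat := fun i j => if Nat.eqb i j then C1 else C0.
Fixpoint mpow (n : nat) (X : mat) (m : nat) : mat :=
  match m with O => mid | S p => mmul n (mpow n X p) X end.

(* limit of a real sequence (0 if it does not converge) *)
Definition Rlim (u : nat -> R) : R :=
  match excluded_middle_informative (exists l, Un_cv u l) with
  | left H => proj1_sig (constructive_indefinite_description _ H)
  | right _ => 0
  end.

Definition mcos_partial (n : nat) (X : mat) (K : nat) : mat :=
  fun i j => Csum (S K) (fun m =>
     Cscale ((-1) ^ m / INR (fact (2 * m))) (mpow n X (2 * m) i j)).

Definition mcos (n : nat) (X : mat) : mat :=
  fun i j => (Rlim (fun K => fst (mcos_partial n X K i j)),
              Rlim (fun K => snd (mcos_partial n X K i j))).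

(* rank X <= r : the column space of X is spanned by r vectors of Cpx^n *)
Definition rank_le (n : nat) (X : mat) (r : nat) : Prop :=
  exists U : mat, forall j, (j < n)%nat ->
    exists coef : nat -> Cpx, forall i, (i < n)%nat ->
      X i j = Csum r (fun l => Cmul (coef l) (U i l)).

(* spectral norm ||X||_2 <= eps : ||X x||_2 <= eps ||x||_2 for all x in Cpx^n *)
Definition vnorm (n : nat) (x : nat -> Cpx) : R := sqrt (Rsumn n (fun i => Cmod2 (x i))).
Definition mvec (n : nat) (X : mat) (x : nat -> Cpx) : nat -> Cpx :=
  fun i => Csum n (fun l => Cmul (X i l) (x l)).
Definition spec_norm_le (n : nat) (X : mat) (eps : R) : Prop :=
  forall x : nat -> Cpx, vnorm n (mvec n X x) <= eps * vnorm n x.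

(* Main.v *)
From Coquelicot Require Import Coquelicot.
From Stdlib Require Import Reals Lra Lia ZArith Classical ClassicalEpsilon FunctionalExtensionality.
Require Import Defs.
Open Scope R_scope.

Lemma Rsumn_ext n g h : (forall i, (i < n)%nat -> g i = h i) -> Rsumn n g = Rsumn n h.
Proof. induction n; simpl; intros H; auto. rewrite IHn by (intros; apply H; lia). rewrite H by lia; auto. Qed.
Lemma Rsumn_plus n g h : Rsumn n (fun i => g i + h i) = Rsumn n g + Rsumn n h.
Proof. induction n; simpl; [ring|rewrite IHn; ring]. Qed.
Lemma Rsumn_minus n g h : Rsumn n (fun i => g i - h i) = Rsumn n g - Rsumn n h.
Proof. induction n; simpl; [ring|rewrite IHn; ring]. Qed.
Lemma Rsumn_scal n c g : Rsumn n (fun i => c * g i) = c * Rsumn n g.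
Proof. induction n; simpl; [ring|rewrite IHn; ring]. Qed.
Lemma Rsumn_const n c : Rsumn n (fun _ => c) = INR n * c.
Proof. induction n; simpl Rsumn; [simpl; ring|rewrite IHn, S_INR; ring]. Qed.
Lemma Rsumn_le n g h : (forall i, (i < n)%nat -> g i <= h i) -> Rsumn n g <= Rsumn n h.
Proof. induction n; simpl; intros H; [lra|]. assert (H1 := H n (Nat.lt_succ_diag_r n)).
  assert (Rsumn n g <= Rsumn n h) by (apply IHn; intros; apply H; lia). lra. Qed.
Lemma Rsumn_nonneg n g : (forall i, (i < n)%nat -> 0 <= g i) -> 0 <= Rsumn n g.
Proof. intros H. replace 0 with (Rsumn n (fun _ => 0)). apply Rsumn_le; auto.
  rewrite Rsumn_const; ring. Qed.
Lemma Rsumn_add n m g : Rsumn (n + m) g = Rsumn n g + Rsumn m (fun i => g (n + i)%nat).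
Proof. induction m; simpl. rewrite Nat.add_0_r; ring. rewrite Nat.add_succ_r; simpl; rewrite IHm; ring. Qed.
Lemma Rsumn_swap n m g : Rsumn n (fun i => Rsumn m (fun j => g i j)) = Rsumn m (fun j => Rsumn n (fun i => g i j)).
Proof. induction n; simpl. rewrite Rsumn_const; ring. rewrite IHn, <- Rsumn_plus; auto. Qed.
Lemma Rsumn_term_le n g k : (forall i, (i < n)%nat -> 0 <= g i) -> (k < n)%nat -> g k <= Rsumn n g.
Proof. induction n; intros H Hk; [lia|]. simpl.
  destruct (Nat.eq_dec k n). subst. assert (0 <= Rsumn n g) by (apply Rsumn_nonneg; intros; apply H; lia). lra.
  assert (g k <= Rsumn n g) by (apply IHn; [intros; apply H; lia|lia]). assert (0 <= g n) by (apply H; lia). lra. Qed.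
Lemma Rsumn_single n k c : (k < n)%nat -> Rsumn n (fun i => if Nat.eqb i k then c else 0) = c.
Proof. induction n; intros Hk; [lia|]. simpl. destruct (Nat.eqb_spec n k).
  subst. rewrite (Rsumn_ext _ _ (fun _ => 0)). rewrite Rsumn_const; ring.
  intros i Hi; destruct (Nat.eqb_spec i k); [lia|auto].
  rewrite IHn by lia; ring. Qed.
Lemma Rsumn_zero n : Rsumn n (fun _ => 0) = 0.
Proof. rewrite Rsumn_const; ring. Qed.

Lemma Cscale_eq r z : Cscale r z = Cmult (RtoC r) z.
Proof. destruct z; unfold Cscale, Cmult, RtoC; simpl; f_equal; ring. Qed.
Lemma Cadd_eq z w : Cadd z w = Cplus z w. Proof. reflexivity. Qed.
Lemma Cmul_eq z w : Cmul z w = Cmult z w. Proof. reflexivity. Qed.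
Lemma Csub_eq z w : Csub z w = Cminus z w. Proof. reflexivity. Qed.
Lemma C0_eq : C0 = RtoC 0. Proof. reflexivity. Qed.
Lemma C1_eq : C1 = RtoC 1. Proof. reflexivity. Qed.
Lemma Cmod2_eq z : Cmod2 z = Cmod z ^ 2.
Proof. unfold Cmod2, Cmod. rewrite pow2_sqrt. simpl; ring. destruct z; simpl; nra. Qed.
Lemma Cmod2_nonneg z : 0 <= Cmod2 z. Proof. unfold Cmod2; nra. Qed.

Lemma Cpx_ring_theory : ring_theory (RtoC 0 : Cpx) (RtoC 1) Cplus Cmult Cminus Complex.Copp (@eq Cpx).
Proof. exact C_ring_theory. Qed.
Add Ring Cpx_ring : Cpx_ring_theory.
Ltac tocx := unfold Csub in *; change Defs.Copp with Complex.Copp in *; repeat rewrite Cscale_eq in *;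
  change Cadd with Cplus in *; change Cmul with Cmult in *;
  change Defs.C0 with (RtoC 0) in *; change Defs.C1 with (RtoC 1) in *.
Ltac ceq := match goal with |- @eq _ ?a ?b => change (@eq Complex.C a b) end.
Ltac cring := tocx; first [ring | ceq; ring | match goal with |- @eq _ ?a ?b => change (@eq Cpx a b) end; ring].

Lemma Csum_pair n g : Csum n g = (Rsumn n (fun i => fst (g i)), Rsumn n (fun i => snd (g i))).
Proof. induction n; simpl; auto. rewrite IHn; reflexivity. Qed.
Lemma Csum_ext n g h : (forall i, (i < n)%nat -> g i = h i) -> Csum n g = Csum n h.
Proof. induction n; simpl; intros H; auto. rewrite IHn by (intros; apply H; lia). rewrite H by lia; auto. Qed.
Lemma Csum_plus n g h : Csum n (fun i => Cplus (g i) (h i)) = Cplus (Csum n g) (Csum n h).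
Proof. induction n; simpl. unfold C0, Cplus; simpl; f_equal; ring. rewrite IHn. cring. Qed.
Lemma Csum_mull n c g : Csum n (fun i => Cmult c (g i)) = Cmult c (Csum n g).
Proof. induction n; simpl. unfold C0, Cmult; simpl; f_equal; ring. rewrite IHn. cring. Qed.
Lemma Csum_mulr n c g : Csum n (fun i => Cmult (g i) c) = Cmult (Csum n g) c.
Proof. induction n; simpl. unfold C0, Cmult; simpl; f_equal; ring. rewrite IHn. cring. Qed.
Lemma Csum_opp n g : Csum n (fun i => Complex.Copp (g i)) = Complex.Copp (Csum n g).
Proof. induction n; simpl. unfold C0, Complex.Copp; simpl; f_equal; ring. rewrite IHn. cring. Qed.
Lemma Csum_minus n g h : Csum n (fun i => Cminus (g i) (h i)) = Cminus (Csum n g) (Csum n h).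
Proof. induction n; simpl. unfold C0, Cminus, Cplus, Complex.Copp; simpl; f_equal; ring. rewrite IHn. cring. Qed.
Lemma Csum_zero n : Csum n (fun _ => RtoC 0) = RtoC 0.
Proof. induction n; simpl; auto. rewrite IHn. cring. Qed.
Lemma Csum_const n c : Csum n (fun _ => c) = Cmult (RtoC (INR n)) c.
Proof. rewrite Csum_pair, !Rsumn_const. destruct c; unfold Cmult, RtoC; simpl; f_equal; ring. Qed.
Lemma Csum_add n m g : Csum (n + m) g = Cplus (Csum n g) (Csum m (fun i => g (n + i)%nat)).
Proof. rewrite !Csum_pair, !Rsumn_add. reflexivity. Qed.
Lemma Csum_swap n m g : Csum n (fun i => Csum m (fun j => g i j)) = Csum m (fun j => Csum n (fun i => g i j)).
Proof. rewrite !Csum_pair. f_equal.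
  - rewrite (Rsumn_ext _ _ (fun i => Rsumn m (fun j => fst (g i j)))) by (intros; rewrite Csum_pair; auto).
    rewrite Rsumn_swap. apply Rsumn_ext; intros; rewrite Csum_pair; auto.
  - rewrite (Rsumn_ext _ _ (fun i => Rsumn m (fun j => snd (g i j)))) by (intros; rewrite Csum_pair; auto).
    rewrite Rsumn_swap. apply Rsumn_ext; intros; rewrite Csum_pair; auto. Qed.
Lemma Csum_single n k c : (k < n)%nat -> Csum n (fun i => if Nat.eqb i k then c else RtoC 0) = c.
Proof. intros Hk. rewrite Csum_pair. destruct c as [a b].
  rewrite (Rsumn_ext _ _ (fun i => if Nat.eqb i k then a else 0)) by (intros; destruct (Nat.eqb i k); auto).
  rewrite (Rsumn_ext n (fun i => snd _) (fun i => if Nat.eqb i k then b else 0)) by (intros; destruct (Nat.eqb i k); auto).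
  rewrite !Rsumn_single; auto. Qed.
Lemma Cmod_Csum n g : Cmod (Csum n g) <= Rsumn n (fun i => Cmod (g i)).
Proof. induction n; simpl. change C0 with (RtoC 0). rewrite Cmod_0; lra.
  change Cadd with Cplus. eapply Rle_trans; [apply Cmod_triangle|]. lra. Qed.
Lemma Rsumn_opp n g : Rsumn n (fun i => - g i) = - Rsumn n g.
Proof. induction n; simpl; [ring|rewrite IHn; ring]. Qed.
Lemma Csum_conj n g : Cconj (Csum n g) = Csum n (fun i => Cconj (g i)).
Proof. rewrite !Csum_pair. unfold Cconj; simpl. f_equal. rewrite Rsumn_opp; auto. Qed.

Definition nsq n (x : nat -> Cpx) := Rsumn n (fun i => Cmod2 (x i)).
Definition ip n (y z : nat -> Cpx) := Csum n (fun i => Cmult (Cconj (y i)) (z i)).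
Definition qb n (M : mat) d := forall x y lam, 0 < lam ->
  Cmod (ip n y (mvec n M x)) <= d / 2 * (lam * nsq n y + nsq n x / lam).
Definition meq n (A B : mat) := forall i j, (i < n)%nat -> (j < n)%nat -> A i j = B i j.

Lemma nsq_nonneg n x : 0 <= nsq n x.
Proof. apply Rsumn_nonneg; intros; apply Cmod2_nonneg. Qed.
Lemma nsq_ext n x x' : (forall i, (i < n)%nat -> x i = x' i) -> nsq n x = nsq n x'.
Proof. intros H; apply Rsumn_ext; intros; rewrite H; auto. Qed.
Lemma ip_ext n y z z' : (forall i, (i < n)%nat -> z i = z' i) -> ip n y z = ip n y z'.
Proof. intros H; apply Csum_ext; intros; rewrite H; auto. Qed.

Lemma amgm a b lam : 0 < lam -> a * b <= (lam * a ^ 2 + b ^ 2 / lam) / 2.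
Proof. intros H. assert (lam * a ^ 2 + b ^ 2 / lam - 2 * a * b = (lam * a - b) ^ 2 / lam) by (field; lra).
  assert (0 <= (lam * a - b) ^ 2 / lam) by (unfold Rdiv; apply Rmult_le_pos; [apply pow2_ge_0| left; apply Rinv_0_lt_compat; lra]). lra. Qed.

Lemma Rsumn_comb n a b lam : 0 < lam -> Rsumn n (fun i => (lam * a i + b i / lam) / 2) = (lam * Rsumn n a + Rsumn n b / lam) / 2.
Proof. intros H. induction n; simpl. field; lra. rewrite IHn. field; lra. Qed.
Lemma ip_bound n y z lam : 0 < lam -> Cmod (ip n y z) <= (lam * nsq n y + nsq n z / lam) / 2.
Proof. intros H. unfold ip. eapply Rle_trans; [apply Cmod_Csum|].
  unfold nsq. rewrite <- Rsumn_comb by auto.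
  apply Rsumn_le; intros. rewrite Cmod_mult, Cmod_conj, !Cmod2_eq. apply amgm; auto. Qed.

Lemma ip_self n z : ip n z z = RtoC (nsq n z).
Proof. unfold ip, nsq. rewrite Csum_pair. unfold RtoC. f_equal.
  apply Rsumn_ext; intros; unfold Cmod2, Cconj, Cmult; simpl; ring.
  rewrite <- (Rsumn_zero n). apply Rsumn_ext; intros; unfold Cconj, Cmult; simpl; ring. Qed.

Lemma sqrt_le_sq a c : 0 <= c -> sqrt a <= c -> 0 <= a -> a <= c ^ 2.
Proof. intros Hc H Ha. assert (0 <= sqrt a) by apply sqrt_pos. rewrite <- (sqrt_sqrt a Ha). simpl. nra. Qed.

Lemma spec_nsq n M d x : 0 <= d -> spec_norm_le n M d -> nsq n (mvec n M x) <= d ^ 2 * nsq n x.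
Proof. intros Hd H. specialize (H x). unfold vnorm in H. fold (nsq n x) (nsq n (mvec n M x)) in H.
  assert (0 <= sqrt (nsq n x)) by apply sqrt_pos.
  apply sqrt_le_sq in H; [|apply Rmult_le_pos; auto|apply nsq_nonneg].
  rewrite Rpow_mult_distr, pow2_sqrt in H by apply nsq_nonneg. auto. Qed.

Lemma qb_spec n M d : 0 <= d -> qb n M d -> spec_norm_le n M d.
Proof. intros Hd H x. set (z := mvec n M x). assert (Hz : nsq n z <= d ^ 2 * nsq n x).
  { assert (Ha : forall lam, 0 < lam -> nsq n z <= d / 2 * (lam * nsq n z + nsq n x / lam)).
    { intros lam Hl. specialize (H x z lam Hl). fold z in H. rewrite ip_self, Cmod_R, Rabs_pos_eq in H by apply nsq_nonneg. auto. }
    destruct (Req_dec d 0). subst. specialize (Ha 1 Rlt_0_1). lra.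
    specialize (Ha (/ d) ltac:(apply Rinv_0_lt_compat; lra)).
    replace (d / 2 * (/ d * nsq n z + nsq n x / / d)) with (nsq n z / 2 + d ^ 2 * nsq n x / 2) in Ha by (field; auto). lra. }
  unfold vnorm. fold (nsq n z) (nsq n x).
  rewrite <- (sqrt_pow2 d Hd), <- sqrt_mult_alt by (apply pow2_ge_0). apply sqrt_le_1_alt. lra. Qed.

Lemma small_le0 a c : (forall mu, 0 < mu -> a <= mu * c) -> 0 <= c -> a <= 0.
Proof. intros H Hc. destruct (Rle_dec a 0); auto. exfalso.
  specialize (H (a / (2 * (c + 1))) ltac:(apply Rdiv_lt_0_compat; lra)).
  assert (a / (2 * (c + 1)) * c < a).
  { apply (Rmult_lt_reg_r (2*(c+1))). lra. field_simplify; [|lra]. nra. } lra. Qed.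

Lemma spec_qb n M d : 0 <= d -> spec_norm_le n M d -> qb n M d.
Proof. intros Hd H x y lam Hl. assert (Hz := spec_nsq n M d x Hd H). set (z := mvec n M x) in *.
  destruct (Req_dec d 0).
  - subst. replace (0 / 2 * (lam * nsq n y + nsq n x / lam)) with 0 by (field; lra).
    apply small_le0 with (c := nsq n y / 2); [|assert (0 <= nsq n y) by apply nsq_nonneg; lra].
    intros mu Hmu. eapply Rle_trans; [apply (ip_bound _ _ _ mu Hmu)|].
    assert (0 <= nsq n z) by apply nsq_nonneg. replace (nsq n z) with 0 by (simpl in Hz; lra).
    unfold Rdiv; lra.
  - eapply Rle_trans; [apply (ip_bound _ _ _ (d * lam)); nra|].
    assert (nsq n z / (d * lam) <= d ^ 2 * nsq n x / (d * lam)).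
    { unfold Rdiv. apply Rmult_le_compat_r; auto. left; apply Rinv_0_lt_compat; nra. }
    replace (d / 2 * (lam * nsq n y + nsq n x / lam)) with ((d * lam * nsq n y + d ^ 2 * nsq n x / (d * lam)) / 2) by (field; lra). lra. Qed.

Lemma vnorm_nonneg n x : 0 <= vnorm n x. Proof. apply sqrt_pos. Qed.
Lemma spec_mono n M d d' : d <= d' -> spec_norm_le n M d -> spec_norm_le n M d'.
Proof. intros H1 H x. eapply Rle_trans; [apply H|]. apply Rmult_le_compat_r; auto. apply vnorm_nonneg. Qed.

Lemma mvec_meq n A B x i : meq n A B -> (i < n)%nat -> mvec n A x i = mvec n B x i.
Proof. intros H Hi. apply Csum_ext; intros; rewrite H; auto. Qed.
Lemma qb_meq n A B d : meq n A B -> qb n A d -> qb n B d.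
Proof. intros H Hq x y lam Hl. rewrite (ip_ext _ _ _ (mvec n A x)). apply Hq; auto.
  intros; symmetry; apply mvec_meq; auto. Qed.
Lemma vnorm_ext n x x' : (forall i, (i < n)%nat -> x i = x' i) -> vnorm n x = vnorm n x'.
Proof. intros H. unfold vnorm. f_equal. apply (nsq_ext n x x' H). Qed.
Lemma spec_meq n A B d : meq n A B -> spec_norm_le n A d -> spec_norm_le n B d.
Proof. intros H Hs x. rewrite (vnorm_ext _ _ (mvec n A x)). apply Hs. intros; symmetry; apply mvec_meq; auto. Qed.

Definition madd (A B : mat) : mat := fun i j => Cplus (A i j) (B i j).
Definition mscal (c : Cpx) (A : mat) : mat := fun i j => Cmult c (A i j).
Definition msum K (A : nat -> mat) : mat := fun i j => Csum K (fun m => A m i j).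
Definition mzero : mat := fun _ _ => RtoC 0.

Lemma mvec_madd n A B x i : mvec n (madd A B) x i = Cplus (mvec n A x i) (mvec n B x i).
Proof. unfold mvec, madd. rewrite <- Csum_plus. apply Csum_ext; intros; cring. Qed.
Lemma ip_plus n y u v : ip n y (fun i => Cplus (u i) (v i)) = Cplus (ip n y u) (ip n y v).
Proof. unfold ip. rewrite <- Csum_plus. apply Csum_ext; intros; cring. Qed.
Lemma qb_add n A B a b : qb n A a -> qb n B b -> qb n (madd A B) (a + b).
Proof. intros HA HB x y lam Hl. rewrite (ip_ext _ _ _ (fun i => Cplus (mvec n A x i) (mvec n B x i)))
  by (intros; apply mvec_madd). rewrite ip_plus. eapply Rle_trans; [apply Cmod_triangle|].
  specialize (HA x y lam Hl). specialize (HB x y lam Hl). lra. Qed.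
Lemma mvec_mscal n c A x i : mvec n (mscal c A) x i = Cmult c (mvec n A x i).
Proof. unfold mvec, mscal. rewrite <- Csum_mull. apply Csum_ext; intros; cring. Qed.
Lemma ip_scal n y c u : ip n y (fun i => Cmult c (u i)) = Cmult c (ip n y u).
Proof. unfold ip. rewrite <- Csum_mull. apply Csum_ext; intros; cring. Qed.
Lemma qb_scal n A c a : qb n A a -> qb n (mscal c A) (Cmod c * a).
Proof. intros HA x y lam Hl. rewrite (ip_ext _ _ _ (fun i => Cmult c (mvec n A x i))) by (intros; apply mvec_mscal).
  rewrite ip_scal, Cmod_mult. specialize (HA x y lam Hl). assert (0 <= Cmod c) by apply Cmod_ge_0.
  replace (Cmod c * a / 2 * (lam * nsq n y + nsq n x / lam)) with (Cmod c * (a / 2 * (lam * nsq n y + nsq n x / lam))) by (unfold Rdiv; ring).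
  apply Rmult_le_compat_l; auto. Qed.
Lemma qb_zero n : qb n mzero 0.
Proof. intros x y lam Hl. unfold ip, mvec, mzero.
  rewrite (Csum_ext _ _ (fun _ => RtoC 0)). rewrite Csum_zero, Cmod_0. lra.
  intros. rewrite (Csum_ext _ _ (fun _ => RtoC 0)). rewrite Csum_zero. cring.
  intros; cring. Qed.
Lemma qb_msum n K A d : (forall m, (m < K)%nat -> qb n (A m) (d m)) -> qb n (msum K A) (Rsumn K d).
Proof. induction K; intros H.
  - simpl. eapply qb_meq; [|apply qb_zero]. intros i j _ _. reflexivity.
  - simpl. apply (qb_meq n (madd (msum K A) (A K))). intros i j _ _; reflexivity.
    apply qb_add. apply IHK; intros; apply H; lia. apply H; lia. Qed.

Lemma spec_add n A B a b : 0 <= a -> 0 <= b -> spec_norm_le n A a -> spec_norm_le n B b -> spec_norm_le n (madd A B) (a + b).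
Proof. intros. apply qb_spec; [lra|]. apply qb_add; apply spec_qb; auto. Qed.
Lemma spec_scal n A c a : 0 <= a -> spec_norm_le n A a -> spec_norm_le n (mscal c A) (Cmod c * a).
Proof. intros. apply qb_spec. apply Rmult_le_pos; auto; apply Cmod_ge_0. apply qb_scal; apply spec_qb; auto. Qed.
Lemma spec_msum n K A d : (forall m, (m < K)%nat -> 0 <= d m /\ spec_norm_le n (A m) (d m)) -> spec_norm_le n (msum K A) (Rsumn K d).
Proof. intros H. apply qb_spec. apply Rsumn_nonneg; intros; apply H; auto.
  apply qb_msum; intros; apply spec_qb; apply H; auto. Qed.

Lemma mvec_mmul n A B x i : mvec n (mmul n A B) x i = mvec n A (mvec n B x) i.
Proof. unfold mvec, mmul. change Cmul with Cmult.
  rewrite (Csum_ext _ _ (fun l => Csum n (fun k => Cmult (A i k) (Cmult (B k l) (x l))))).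
  rewrite Csum_swap. apply Csum_ext; intros. rewrite Csum_mull. auto.
  intros. rewrite <- Csum_mulr. apply Csum_ext; intros; cring. Qed.
Lemma spec_mul n A B a b : 0 <= a -> spec_norm_le n A a -> spec_norm_le n B b -> spec_norm_le n (mmul n A B) (a * b).
Proof. intros Ha HA HB x. rewrite (vnorm_ext _ _ (mvec n A (mvec n B x))) by (intros; apply mvec_mmul).
  eapply Rle_trans; [apply HA|]. rewrite Rmult_assoc. apply Rmult_le_compat_l; auto. Qed.
Lemma mvec_mid n x i : (i < n)%nat -> mvec n mid x i = x i.
Proof. intros Hi. unfold mvec, mid. rewrite (Csum_ext _ _ (fun l => if Nat.eqb l i then x i else RtoC 0)).
  apply Csum_single; auto. intros l Hl. rewrite Nat.eqb_sym. destruct (Nat.eqb_spec l i). subst. cring. cring. Qed.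
Lemma spec_mid n : spec_norm_le n mid 1.
Proof. intros x. rewrite (vnorm_ext _ _ x) by (intros; apply mvec_mid; auto). lra. Qed.
Lemma spec_pow n M B m : 0 <= B -> spec_norm_le n M B -> spec_norm_le n (mpow n M m) (B ^ m).
Proof. intros HB H. induction m; simpl. apply spec_mid.
  rewrite Rmult_comm. apply spec_mul; auto. apply pow_le; auto. Qed.

Lemma sqrt_Cmod2 z : sqrt (Cmod2 z) = Cmod z.
Proof. unfold Cmod, Cmod2. f_equal. simpl; ring. Qed.
Lemma spec_entry n M B i j : (i < n)%nat -> (j < n)%nat -> spec_norm_le n M B -> Cmod (M i j) <= B.
Proof. intros Hi Hj H. set (e := fun l => if Nat.eqb l j then RtoC 1 else RtoC 0).
  specialize (H e). assert (Hn : nsq n e = 1).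
  { unfold nsq. rewrite (Rsumn_ext _ _ (fun l => if Nat.eqb l j then 1 else 0)). apply Rsumn_single; auto.
    intros; unfold e; destruct (Nat.eqb i0 j); unfold Cmod2; simpl; ring. }
  unfold vnorm in H. fold (nsq n e) in H. rewrite Hn, sqrt_1, Rmult_1_r in H.
  eapply Rle_trans; [|apply H]. rewrite <- sqrt_Cmod2. apply sqrt_le_1_alt.
  replace (Cmod2 (M i j)) with (Cmod2 (mvec n M e i)). apply (Rsumn_term_le n (fun i => Cmod2 (mvec n M e i)) i); auto. intros; apply Cmod2_nonneg.
  f_equal. unfold mvec, e. rewrite (Csum_ext _ _ (fun l => if Nat.eqb l j then M i j else RtoC 0)).
  apply Csum_single; auto. intros l Hl. destruct (Nat.eqb_spec l j). subst. cring. cring. Qed.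

Lemma qb_schur n M s : (forall i, (i < n)%nat -> Rsumn n (fun j => Cmod (M i j)) <= s) ->
  (forall j, (j < n)%nat -> Rsumn n (fun i => Cmod (M i j)) <= s) -> qb n M s.
Proof. intros Hr Hc x y lam Hl. unfold ip, mvec. eapply Rle_trans; [apply Cmod_Csum|].
  eapply Rle_trans. apply Rsumn_le. intros i Hi. rewrite Cmod_mult, Cmod_conj.
  apply Rmult_le_compat_l. apply Cmod_ge_0. apply Cmod_Csum.
  eapply Rle_trans. apply Rsumn_le. intros i Hi. rewrite <- Rsumn_scal. apply Rsumn_le. intros j Hj.
  change Cmul with Cmult. rewrite Cmod_mult.
  replace (Cmod (y i) * (Cmod (M i j) * Cmod (x j))) with (Cmod (M i j) * (Cmod (y i) * Cmod (x j))) by ring.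
  apply Rmult_le_compat_l. apply Cmod_ge_0. apply (amgm _ _ lam Hl).
  rewrite (Rsumn_ext _ _ (fun i => lam / 2 * (Cmod2 (y i) * Rsumn n (fun j => Cmod (M i j))) +
     / (2 * lam) * Rsumn n (fun j => Cmod (M i j) * Cmod2 (x j)))).
  rewrite Rsumn_plus, !Rsumn_scal, Rsumn_swap.
  assert (Rsumn n (fun i => Cmod2 (y i) * Rsumn n (fun j => Cmod (M i j))) <= s * nsq n y).
  { unfold nsq. rewrite <- Rsumn_scal. apply Rsumn_le; intros. rewrite Rmult_comm.
    apply Rmult_le_compat_r. apply Cmod2_nonneg. auto. }
  assert (Rsumn n (fun j => Rsumn n (fun i => Cmod (M i j) * Cmod2 (x j))) <= s * nsq n x).
  { unfold nsq. rewrite <- Rsumn_scal. apply Rsumn_le; intros.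
    rewrite (Rsumn_ext _ _ (fun i0 => Cmod2 (x i) * Cmod (M i0 i))) by (intros; ring). rewrite Rsumn_scal.
    rewrite Rmult_comm. apply Rmult_le_compat_r. apply Cmod2_nonneg. auto. }
  assert (0 < lam / 2) by lra. assert (0 < / (2 * lam)) by (apply Rinv_0_lt_compat; lra).
  replace (s / 2 * (lam * nsq n y + nsq n x / lam)) with (lam / 2 * (s * nsq n y) + / (2 * lam) * (s * nsq n x)) by (field; lra).
  apply Rplus_le_compat; apply Rmult_le_compat_l; lra.
  intros i Hi. rewrite <- !Rsumn_scal, <- Rsumn_plus. apply Rsumn_ext; intros j Hj.
  rewrite !Cmod2_eq. field. lra. Qed.

Lemma Cplus0r z : Cplus z (RtoC 0) = z. Proof. cring. Qed.
Definition msub (A B : mat) : mat := fun i j => Cminus (A i j) (B i j).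

Lemma rank_meq n X Y r : meq n X Y -> rank_le n X r -> rank_le n Y r.
Proof. intros H [U HU]. exists U. intros j Hj. destruct (HU j Hj) as [c Hc]. exists c.
  intros i Hi. rewrite <- H by auto. apply Hc; auto. Qed.

Lemma rank_mono n X r r' : (r <= r')%nat -> rank_le n X r -> rank_le n X r'.
Proof. intros Hr [U HU]. exists U. intros j Hj. destruct (HU j Hj) as [c Hc].
  exists (fun l => if Nat.ltb l r then c l else RtoC 0). intros i Hi. rewrite Hc by auto.
  replace r' with (r + (r' - r))%nat by lia. rewrite Csum_add.
  rewrite (Csum_ext (r' - r) _ (fun _ => RtoC 0)). rewrite Csum_zero.
  change Cadd with Cplus. change Cmul with Cmult. rewrite Cplus0r.
  apply Csum_ext; intros l Hl. destruct (Nat.ltb_spec l r); [auto|lia].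
  intros l Hl. destruct (Nat.ltb_spec (r + l) r); [lia|]. cring. Qed.

Lemma rank_add n A B r1 r2 : rank_le n A r1 -> rank_le n B r2 -> rank_le n (madd A B) (r1 + r2).
Proof. intros [U1 H1] [U2 H2]. exists (fun i l => if Nat.ltb l r1 then U1 i l else U2 i (l - r1)%nat).
  intros j Hj. destruct (H1 j Hj) as [c1 Hc1]. destruct (H2 j Hj) as [c2 Hc2].
  exists (fun l => if Nat.ltb l r1 then c1 l else c2 (l - r1)%nat). intros i Hi.
  unfold madd. rewrite Hc1, Hc2 by auto. rewrite Csum_add. f_equal.
  apply Csum_ext; intros l Hl. destruct (Nat.ltb_spec l r1); [auto|lia].
  apply Csum_ext; intros l Hl. destruct (Nat.ltb_spec (r1 + l) r1); [lia|].
  replace (r1 + l - r1)%nat with l by lia. auto. Qed.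

Lemma rank_scal n A c r : rank_le n A r -> rank_le n (mscal c A) r.
Proof. intros [U HU]. exists U. intros j Hj. destruct (HU j Hj) as [cf Hc].
  exists (fun l => Cmult c (cf l)). intros i Hi. unfold mscal. rewrite Hc by auto.
  change Cmul with Cmult. rewrite <- Csum_mull. apply Csum_ext; intros; cring. Qed.

Lemma rank_mul_l n A B r : rank_le n B r -> rank_le n (mmul n A B) r.
Proof. intros [U HU]. exists (mmul n A U). intros j Hj. destruct (HU j Hj) as [cf Hc].
  exists cf. intros i Hi. unfold mmul. change Cmul with Cmult.
  rewrite (Csum_ext n _ (fun k => Cmult (A i k) (Csum r (fun l => Cmult (cf l) (U k l))))) by (intros; rewrite Hc; auto).
  rewrite (Csum_ext n _ (fun k => Csum r (fun l => Cmult (cf l) (Cmult (A i k) (U k l))))).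
  rewrite Csum_swap. apply Csum_ext; intros. rewrite Csum_mull; auto.
  intros k Hk. change Cmul with Cmult. rewrite <- Csum_mull. apply Csum_ext; intros; cring. Qed.

Lemma rank_mul_r n A B r : rank_le n A r -> rank_le n (mmul n A B) r.
Proof. intros [U HU].
  assert (Hc : forall k, exists c : nat -> Cpx, (k < n)%nat -> forall i, (i < n)%nat -> A i k = Csum r (fun l => Cmul (c l) (U i l))).
  { intros k. destruct (lt_dec k n). destruct (HU k l) as [c Hc]. exists c; auto. exists (fun _ => RtoC 0); intros; lia. }
  apply choice in Hc. destruct Hc as [cf Hcf]. exists U. intros j Hj.
  exists (fun l => Csum n (fun k => Cmult (cf k l) (B k j))). intros i Hi. unfold mmul. change Cmul with Cmult.
  rewrite (Csum_ext n _ (fun k => Csum r (fun l => Cmult (Cmult (cf k l) (B k j)) (U i l)))).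
  rewrite Csum_swap. apply Csum_ext; intros. rewrite Csum_mulr; auto.
  intros k Hk. rewrite (Hcf k Hk i Hi). change Cmul with Cmult. rewrite <- Csum_mulr. apply Csum_ext; intros; cring. Qed.

Lemma rank_zero n X : meq n X mzero -> rank_le n X 0.
Proof. intros H. exists mzero. intros j Hj. exists (fun _ => RtoC 0). intros i Hi. rewrite H by auto. reflexivity. Qed.

Lemma rank_msum n K A r : (forall m, (m < K)%nat -> rank_le n (A m) r) -> rank_le n (msum K A) (K * r).
Proof. induction K; intros H. apply rank_zero. intros i j _ _; reflexivity.
  apply (rank_meq n (madd (msum K A) (A K))). intros i j _ _; reflexivity.
  replace (S K * r)%nat with (K * r + r)%nat by lia. apply rank_add. apply IHK; intros; apply H; lia. apply H; lia. Qed.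

Lemma rank_colsupp n X r s : (forall j, (j < n)%nat -> (exists l, (l < r)%nat /\ s l = j) \/ (forall i, (i < n)%nat -> X i j = RtoC 0)) ->
  rank_le n X r.
Proof. intros H. exists (fun i l => X i (s l)). intros j Hj. destruct (H j Hj) as [[l [Hl Hs]]|Hz].
  - exists (fun m => if Nat.eqb m l then RtoC 1 else RtoC 0). intros i Hi.
    rewrite (Csum_ext r _ (fun m => if Nat.eqb m l then X i j else RtoC 0)). rewrite Csum_single; auto.
    intros m Hm. destruct (Nat.eqb_spec m l). subst. cring. cring.
  - exists (fun _ => RtoC 0). intros i Hi. rewrite Hz by auto.
    rewrite (Csum_ext r _ (fun _ => RtoC 0)). rewrite Csum_zero; auto. intros; cring. Qed.

Lemma mmul_meq n A A' B B' : meq n A A' -> meq n B B' -> meq n (mmul n A B) (mmul n A' B').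
Proof. intros HA HB i j Hi Hj. unfold mmul. apply Csum_ext; intros. rewrite HA, HB; auto. Qed.

Definition pdiff n X Z p : mat := msub (mpow n X p) (mpow n Z p).
Lemma pdiff_S n X Z p : pdiff n X Z (S p) = madd (mmul n (mpow n X p) (msub X Z)) (mmul n (pdiff n X Z p) Z).
Proof. apply functional_extensionality; intro i; apply functional_extensionality; intro j.
  unfold pdiff, msub, madd, mmul. simpl. unfold mmul. change Cmul with Cmult.
  rewrite <- Csum_plus, <- Csum_minus. apply Csum_ext; intros; cring. Qed.

Lemma rank_pdiff n X Z R r p : meq n (msub X Z) R -> rank_le n R r -> rank_le n (pdiff n X Z p) (p * r).
Proof. intros HR Hr. induction p.
  - apply rank_zero. intros i j _ _. unfold pdiff, msub, mzero. simpl. cring.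
  - rewrite pdiff_S. replace (S p * r)%nat with (r + p * r)%nat by lia. apply rank_add.
    apply rank_mul_l. eapply rank_meq; [|apply Hr]. intros i j Hi Hj; symmetry; apply HR; auto.
    apply rank_mul_r; auto. Qed.

Lemma spec_pdiff n X Z B e p : 1 <= B -> 0 <= e -> spec_norm_le n X B -> spec_norm_le n Z B ->
  spec_norm_le n (msub X Z) e -> spec_norm_le n (pdiff n X Z p) (INR p * B ^ p * e).
Proof. intros HB He HX HZ HE. induction p.
  - apply spec_mono with 0. simpl; lra. apply qb_spec. lra. eapply qb_meq; [|apply qb_zero].
    intros i j _ _. unfold pdiff, msub, mzero; simpl. cring.
  - rewrite pdiff_S. assert (HBp : 1 <= B ^ p) by (apply pow_R1_Rle; lra).
    assert (0 <= INR p) by apply pos_INR.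
    apply spec_mono with (B ^ p * e + INR p * B ^ p * e * B).
    rewrite S_INR. simpl. replace ((INR p + 1) * (B * B ^ p) * e) with (B * B ^ p * e + INR p * B ^ p * e * B) by ring.
    apply Rplus_le_compat_r. assert (0 <= B ^ p * e) by nra. nra.
    apply spec_add. nra. apply Rmult_le_pos; [|lra]. apply Rmult_le_pos; [|lra]. nra.
    apply spec_mul. lra. apply spec_pow; auto; lra. auto.
    apply spec_mul; auto. apply Rmult_le_pos; [|lra]. nra. Qed.

Lemma nat_unbounded A : exists N : nat, A <= INR N.
Proof. destruct (archimed A) as [H1 H2]. destruct (Z_le_gt_dec 0 (up A)).
  exists (Z.to_nat (up A)). rewrite INR_IZR_INZ, Z2Nat.id by auto. lra.
  exists 0%nat. simpl. assert (IZR (up A) <= 0) by (apply IZR_le; lia). lra. Qed.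

Definition ccv (u : nat -> Cpx) (l : Cpx) := Un_cv (fun k => fst (u k)) (fst l) /\ Un_cv (fun k => snd (u k)) (snd l).
Lemma Un_cv_const c : Un_cv (fun _ => c) c.
Proof. intros e He. exists 0%nat. intros. unfold Rdist. rewrite Rminus_diag, Rabs_R0. lra. Qed.
Lemma Un_cv_ext u v l : (forall k, u k = v k) -> Un_cv u l -> Un_cv v l.
Proof. intros H Hu e He. destruct (Hu e He) as [N HN]. exists N. intros. rewrite <- H. auto. Qed.
Lemma ccv_const c : ccv (fun _ => c) c. Proof. split; apply Un_cv_const. Qed.
Lemma ccv_plus u v a b : ccv u a -> ccv v b -> ccv (fun k => Cplus (u k) (v k)) (Cplus a b).
Proof. intros [H1 H2] [H3 H4]. split; simpl. apply (CV_plus _ _ _ _ H1 H3). apply (CV_plus _ _ _ _ H2 H4). Qed.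
Lemma ccv_minus u v a b : ccv u a -> ccv v b -> ccv (fun k => Cminus (u k) (v k)) (Cminus a b).
Proof. intros [H1 H2] [H3 H4]. split; simpl. apply (CV_minus _ _ _ _ H1 H3). apply (CV_minus _ _ _ _ H2 H4). Qed.
Lemma ccv_mult u v a b : ccv u a -> ccv v b -> ccv (fun k => Cmult (u k) (v k)) (Cmult a b).
Proof. intros [H1 H2] [H3 H4]. split; simpl.
  apply (CV_minus _ _ _ _ (CV_mult _ _ _ _ H1 H3) (CV_mult _ _ _ _ H2 H4)).
  apply (CV_plus _ _ _ _ (CV_mult _ _ _ _ H1 H4) (CV_mult _ _ _ _ H2 H3)). Qed.
Lemma ccv_Csum n u a : (forall i, (i < n)%nat -> ccv (fun k => u k i) (a i)) -> ccv (fun k => Csum n (u k)) (Csum n a).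
Proof. induction n; intros H. simpl. apply ccv_const. simpl. change Cadd with Cplus. apply ccv_plus.
  apply IHn; intros; apply H; lia. apply H; lia. Qed.
Lemma ccv_Cmod u a : ccv u a -> Un_cv (fun k => Cmod (u k)) (Cmod a).
Proof. intros [H1 H2]. unfold Cmod. apply (continuity_seq sqrt (fun k => fst (u k) ^ 2 + snd (u k) ^ 2)).
  apply continuity_pt_sqrt. nra. simpl. rewrite !Rmult_1_r.
  apply CV_plus; apply CV_mult; auto.
  eapply Un_cv_ext; [|exact H1]; intros; simpl; ring. eapply Un_cv_ext; [|exact H2]; intros; simpl; ring. Qed.
Lemma Un_cv_shift u l K : Un_cv u l -> Un_cv (fun L => u (K + L)%nat) l.
Proof. intros H e He. destruct (H e He) as [N HN]. exists N. intros. apply HN. lia. Qed.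
Lemma Un_cv_le u l c : Un_cv u l -> (forall k, u k <= c) -> l <= c.
Proof. intros H Hu. apply (Rle_cv_lim Hu H). apply Un_cv_const. Qed.

Definition wc (m : nat) := (-1) ^ m / INR (fact (2 * m)).
Definition cterm n W m : mat := mscal (RtoC (wc m)) (mpow n W (2 * m)).
Lemma mcos_partial_eq n W K : mcos_partial n W K = msum (S K) (cterm n W).
Proof. apply functional_extensionality; intro i; apply functional_extensionality; intro j.
  unfold mcos_partial, msum, cterm, mscal. apply Csum_ext; intros. rewrite Cscale_eq. reflexivity. Qed.

Definition vv B m := B ^ (2 * m) / INR (fact (2 * m)).
Lemma vv_nonneg B m : 0 <= B -> 0 <= vv B m.
Proof. intros. unfold vv. apply Rmult_le_pos. apply pow_le; auto. left; apply Rinv_0_lt_compat, lt_0_INR, lt_O_fact. Qed.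
Lemma Cmod_wc m : Cmod (RtoC (wc m)) = / INR (fact (2 * m)).
Proof. rewrite Cmod_R. unfold wc. unfold Rdiv. rewrite Rabs_mult, pow_1_abs, Rabs_pos_eq. ring.
  left; apply Rinv_0_lt_compat, lt_0_INR, lt_O_fact. Qed.
Lemma spec_cterm n W B m : 0 <= B -> spec_norm_le n W B -> spec_norm_le n (cterm n W m) (vv B m).
Proof. intros HB H. unfold cterm. replace (vv B m) with (Cmod (RtoC (wc m)) * B ^ (2 * m)).
  apply spec_scal. apply pow_le; auto. apply spec_pow; auto. rewrite Cmod_wc. unfold vv; field.
  apply not_0_INR, fact_neq_0. Qed.

Lemma vv_ratio B m : INR m >= B ^ 2 -> 0 <= B -> vv B (S m) <= vv B m / 2.
Proof. intros Hm HB. assert (Hq : vv B (S m) = vv B m * (B ^ 2 / ((2 * INR m + 2) * (2 * INR m + 1)))).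
  { unfold vv. replace (2 * S m)%nat with (S (S (2 * m))) by lia.
    replace (fact (S (S (2 * m)))) with ((S (S (2 * m))) * ((S (2 * m)) * fact (2 * m)))%nat by (simpl; lia).
    rewrite !mult_INR, !S_INR, mult_INR. simpl (INR 2). replace (B ^ S (S (2 * m))) with (B ^ 2 * B ^ (2 * m)) by (simpl; ring).
    assert (0 < INR (fact (2 * m))) by apply lt_0_INR, lt_O_fact. assert (0 <= INR m) by apply pos_INR.
    field. repeat split; lra. }
  rewrite Hq. assert (0 <= INR m) by apply pos_INR.
  assert (B ^ 2 / ((2 * INR m + 2) * (2 * INR m + 1)) <= / 2).
  { apply Rmult_le_reg_r with ((2 * INR m + 2) * (2 * INR m + 1)). nra.
    unfold Rdiv. rewrite Rmult_assoc, Rinv_l by nra. nra. }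
  assert (0 <= vv B m) by (apply vv_nonneg; auto).
  unfold Rdiv. apply Rmult_le_compat_l; auto. Qed.

Lemma vv_tail B K0 : 0 <= B -> B ^ 2 <= INR K0 -> forall r K, (K0 <= K)%nat ->
  Rsumn r (fun q => vv B (S K + q)) <= 2 * vv B (S K).
Proof. intros HB HK0 r. induction r; intros K HK. simpl. assert (0 <= vv B (S K)) by (apply vv_nonneg; auto). lra.
  replace (S r) with (1 + r)%nat by lia. rewrite Rsumn_add. simpl Rsumn at 1.
  rewrite (Rsumn_ext _ _ (fun q => vv B (S (S K) + q))) by (intros; f_equal; lia).
  specialize (IHr (S K) ltac:(lia)).
  assert (vv B (S (S K)) <= vv B (S K) / 2). { apply vv_ratio; auto. apply Rle_ge. apply Rle_trans with (INR K0); auto. apply le_INR; lia. }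
  replace (S (K + 0))%nat with (S K) by lia. lra. Qed.

Lemma vv_lim B : forall e, 0 < e -> exists N, forall m, (N <= m)%nat -> vv B m < e.
Proof. intros e He. destruct (cv_speed_pow_fact B e He) as [N HN]. exists N. intros m Hm.
  specialize (HN (2 * m)%nat ltac:(lia)). unfold Rdist in HN. rewrite Rminus_0_r in HN. unfold vv.
  eapply Rle_lt_trans; [apply Rle_abs|]. auto. Qed.

Lemma partial_diff n W K r : msub (mcos_partial n W (K + r)) (mcos_partial n W K) = msum r (fun q => cterm n W (S K + q)).
Proof. rewrite !mcos_partial_eq. apply functional_extensionality; intro i; apply functional_extensionality; intro j.
  unfold msub, msum. replace (S (K + r)) with (S K + r)%nat by lia. rewrite Csum_add. cring. Qed.

Lemma spec_partial_diff n W B K r : 0 <= B -> spec_norm_le n W B ->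
  spec_norm_le n (msub (mcos_partial n W (K + r)) (mcos_partial n W K)) (Rsumn r (fun q => vv B (S K + q))).
Proof. intros HB H. rewrite partial_diff. apply spec_msum. intros; split. apply vv_nonneg; auto. apply spec_cterm; auto. Qed.

Lemma Rlim_eq u l : Un_cv u l -> Rlim u = l.
Proof. intros H. unfold Rlim. destruct excluded_middle_informative as [e|e].
  destruct (constructive_indefinite_description _ e) as [l' Hl']. simpl. eapply UL_sequence; eauto.
  exfalso; apply e; eauto. Qed.

Lemma cauchy_tail u : (forall e, 0 < e -> exists N, forall K r, (N <= K)%nat -> Rabs (u (K + r)%nat - u K) <= e) -> Cauchy_crit u.
Proof. intros H e He. destruct (H (e / 3) ltac:(lra)) as [N HN]. exists N. intros a b Ha Hb.
  unfold Rdist. assert (H1 := HN N (a - N)%nat (le_n N)). assert (H2 := HN N (b - N)%nat (le_n N)).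
  replace (N + (a - N))%nat with a in H1 by lia. replace (N + (b - N))%nat with b in H2 by lia.
  replace (u a - u b) with ((u a - u N) - (u b - u N)) by ring.
  eapply Rle_lt_trans; [apply Rabs_triang|]. rewrite Rabs_Ropp. lra. Qed.

Lemma mcos_ccv n W B i j : 0 <= B -> spec_norm_le n W B -> (i < n)%nat -> (j < n)%nat ->
  ccv (fun K => mcos_partial n W K i j) (mcos n W i j).
Proof. intros HB H Hi Hj. destruct (nat_unbounded (B ^ 2)) as [K0 HK0].
  assert (Hc : forall e, 0 < e -> exists N, forall K r, (N <= K)%nat -> Cmod (Cminus (mcos_partial n W (K + r) i j) (mcos_partial n W K i j)) <= e).
  { intros e He. destruct (vv_lim B (e / 2) ltac:(lra)) as [N1 HN1]. exists (max K0 N1). intros K r HK.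
    change (Cminus (mcos_partial n W (K + r) i j) (mcos_partial n W K i j)) with (msub (mcos_partial n W (K + r)) (mcos_partial n W K) i j).
    eapply Rle_trans. apply (spec_entry n _ _ i j Hi Hj). apply spec_partial_diff; eauto.
    eapply Rle_trans. apply (vv_tail B K0 HB HK0 r K). lia. specialize (HN1 (S K) ltac:(lia)). lra. }
  assert (C1 : Cauchy_crit (fun K => fst (mcos_partial n W K i j))).
  { apply cauchy_tail. intros e He. destruct (Hc e He) as [N HN]. exists N. intros K r HK.
    eapply Rle_trans; [|apply (HN K r HK)]. eapply Rle_trans; [|apply Rmax_Cmod]. apply Rmax_l. }
  assert (C2 : Cauchy_crit (fun K => snd (mcos_partial n W K i j))).
  { apply cauchy_tail. intros e He. destruct (Hc e He) as [N HN]. exists N. intros K r HK.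
    eapply Rle_trans; [|apply (HN K r HK)]. eapply Rle_trans; [|apply Rmax_Cmod]. apply Rmax_r. }
  destruct (R_complete _ C1) as [l1 Hl1]. destruct (R_complete _ C2) as [l2 Hl2].
  unfold mcos. split; simpl; erewrite Rlim_eq; eauto. Qed.

Lemma ccv_shift u a K : ccv u a -> ccv (fun L => u (K + L)%nat) a.
Proof. intros [H1 H2]. split; apply (Un_cv_shift (fun k => _ (u k))); auto. Qed.

Lemma ccv_ip n y x (M : nat -> mat) T : (forall i l, (i < n)%nat -> (l < n)%nat -> ccv (fun L => M L i l) (T i l)) ->
  ccv (fun L => ip n y (mvec n (M L) x)) (ip n y (mvec n T x)).
Proof. intros H. unfold ip, mvec. apply ccv_Csum. intros i Hi. apply ccv_mult. apply ccv_const.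
  apply ccv_Csum. intros l Hl. apply ccv_mult. apply H; auto. apply ccv_const. Qed.

Lemma mcos_tail n W B K0 K : 0 <= B -> spec_norm_le n W B -> B ^ 2 <= INR K0 -> (K0 <= K)%nat ->
  spec_norm_le n (msub (mcos n W) (mcos_partial n W K)) (2 * vv B (S K)).
Proof. intros HB H HK0 HK. assert (0 <= vv B (S K)) by (apply vv_nonneg; auto).
  apply qb_spec. lra. intros x y lam Hl.
  apply (Un_cv_le (fun L => Cmod (ip n y (mvec n (msub (mcos_partial n W (K + L)) (mcos_partial n W K)) x)))).
  - apply ccv_Cmod. apply ccv_ip. intros i l Hi Hl'. unfold msub. apply ccv_minus.
    apply (ccv_shift (fun K => mcos_partial n W K i l)). apply mcos_ccv with B; auto. apply ccv_const.
  - intros L. apply (spec_qb n _ (2 * vv B (S K))); [lra| |auto]. eapply spec_mono; [|apply (spec_partial_diff n W B); auto].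
    apply vv_tail with K0; auto. Qed.

Lemma cont_plus f g : continuity f -> continuity g -> continuity (fun t => f t + g t).
Proof. intros; exact (continuity_plus f g H H0). Qed.
Lemma cont_minus f g : continuity f -> continuity g -> continuity (fun t => f t - g t).
Proof. intros; exact (continuity_minus f g H H0). Qed.
Lemma cont_mult f g : continuity f -> continuity g -> continuity (fun t => f t * g t).
Proof. intros; exact (continuity_mult f g H H0). Qed.
Lemma cont_opp f : continuity f -> continuity (fun t => - f t).
Proof. intros; exact (continuity_opp f H). Qed.
Lemma cont_const c : continuity (fun _ => c).
Proof. apply continuity_const. intros x y; auto. Qed.
Lemma cont_id : continuity (fun t => t).
Proof. exact (derivable_continuous id derivable_id). Qed.
Lemma cont_comp f g : continuity f -> continuity g -> continuity (fun t => g (f t)).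
Proof. intros; exact (continuity_comp f g H H0). Qed.
Lemma cont_cos f : continuity f -> continuity (fun t => cos (f t)).
Proof. intros; apply cont_comp; auto; apply continuity_cos. Qed.
Lemma cont_sin f : continuity f -> continuity (fun t => sin (f t)).
Proof. intros; apply cont_comp; auto; apply continuity_sin. Qed.
Lemma cont_sqrt f : continuity f -> (forall t, 0 <= f t) -> continuity (fun t => sqrt (f t)).
Proof. intros H Hp x. apply (continuity_pt_comp f sqrt x (H x)). apply continuity_pt_sqrt; auto. Qed.
Lemma cont_lin a b : continuity (fun t => a * t + b).
Proof. apply cont_plus; [apply cont_mult; [apply cont_const|apply cont_id]|apply cont_const]. Qed.

Definition cc (g : R -> Cpx) := continuity (fun t => fst (g t)) /\ continuity (fun t => snd (g t)).
Definition E (u : R) : Cpx := (cos u, sin u).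

Lemma cc_plus g h : cc g -> cc h -> cc (fun t => Cplus (g t) (h t)).
Proof. intros [] []; split; simpl; apply cont_plus; auto. Qed.
Lemma cc_minus g h : cc g -> cc h -> cc (fun t => Cminus (g t) (h t)).
Proof. intros [] []; split; simpl; apply cont_plus; auto; apply cont_opp; auto. Qed.
Lemma cc_mult g h : cc g -> cc h -> cc (fun t => Cmult (g t) (h t)).
Proof. intros [] []; split; simpl; [apply cont_minus|apply cont_plus]; apply cont_mult; auto. Qed.
Lemma cc_const c : cc (fun _ => c).
Proof. split; apply cont_const. Qed.
Lemma cc_conj g : cc g -> cc (fun t => Cconj (g t)).
Proof. intros []; split; simpl; auto. apply cont_opp; auto. Qed.
Lemma cc_E f : continuity f -> cc (fun t => E (f t)).
Proof. intros; split; simpl; [apply cont_cos|apply cont_sin]; auto. Qed.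
Lemma cc_Csum n g : (forall i, (i < n)%nat -> cc (g i)) -> cc (fun t => Csum n (fun i => g i t)).
Proof. induction n; intros H. simpl. apply cc_const. simpl. change Cadd with Cplus. apply cc_plus.
  apply IHn; intros; apply H; lia. apply H; lia. Qed.
Lemma cont_Cmod g : cc g -> continuity (fun t => Cmod (g t)).
Proof. intros [H1 H2]. unfold Cmod. apply cont_sqrt. simpl. apply cont_plus; apply cont_mult; auto; apply cont_mult; auto; apply cont_const.
  intros; nra. Qed.
Lemma cc_RtoC h : continuity h -> cc (fun t => RtoC (h t)).
Proof. split; simpl; auto. apply cont_const. Qed.

Definition I (h : R -> R) : R := RInt h (-PI) PI.
Definition CI (g : R -> Cpx) : Cpx := (I (fun t => fst (g t)), I (fun t => snd (g t))).

Lemma PI_pos : 0 < PI. Proof. apply PI_RGT_0. Qed.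
Lemma exR h : continuity h -> ex_RInt h (-PI) PI.
Proof. intros H. apply (@ex_RInt_continuous R_CompleteNormedModule). intros z _. apply continuity_pt_filterlim. apply H. Qed.
Lemma I_plus g h : continuity g -> continuity h -> I (fun t => g t + h t) = I g + I h.
Proof. intros. unfold I. apply (RInt_plus g h); apply exR; auto. Qed.
Lemma I_minus g h : continuity g -> continuity h -> I (fun t => g t - h t) = I g - I h.
Proof. intros. unfold I. apply (RInt_minus g h); apply exR; auto. Qed.
Lemma I_scal c g : continuity g -> I (fun t => c * g t) = c * I g.
Proof. intros. unfold I. apply (RInt_scal g). apply exR; auto. Qed.
Lemma I_const c : I (fun _ => c) = 2 * PI * c.
Proof. unfold I. rewrite RInt_const. replace (2 * PI * c) with ((PI - - PI) * c) by ring. reflexivity. Qed.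
Lemma I_le g h : continuity g -> continuity h -> (forall t, -PI <= t <= PI -> g t <= h t) -> I g <= I h.
Proof. intros. unfold I. apply RInt_le. assert (0 < PI) by apply PI_pos; lra. apply exR; auto. apply exR; auto.
  intros; apply H1; lra. Qed.
Lemma I_ext g h : (forall t, -PI <= t <= PI -> g t = h t) -> I g = I h.
Proof. intros H. unfold I. apply RInt_ext. intros x Hx. apply H. assert (0 < PI) by apply PI_pos.
  rewrite Rmin_left, Rmax_right in Hx by lra. lra. Qed.

Lemma CI_plus g h : cc g -> cc h -> CI (fun t => Cplus (g t) (h t)) = Cplus (CI g) (CI h).
Proof. intros [] []. unfold CI, Cplus; simpl. f_equal; apply I_plus; auto. Qed.
Lemma CI_mult c g : cc g -> CI (fun t => Cmult c (g t)) = Cmult c (CI g).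
Proof. intros [H1 H2]. unfold CI, Cmult; simpl. f_equal.
  rewrite I_minus, !I_scal; auto; apply cont_mult; auto; apply cont_const.
  rewrite I_plus, !I_scal; auto; apply cont_mult; auto; apply cont_const. Qed.
Lemma CI_const c : CI (fun _ => c) = Cmult (RtoC (2 * PI)) c.
Proof. unfold CI. rewrite !I_const. unfold Cmult, RtoC; simpl. f_equal; ring. Qed.
Lemma CI_zero : CI (fun _ => RtoC 0) = RtoC 0.
Proof. rewrite CI_const. cring. Qed.
Lemma CI_Csum n g : (forall i, (i < n)%nat -> cc (g i)) -> CI (fun t => Csum n (fun i => g i t)) = Csum n (fun i => CI (g i)).
Proof. induction n; intros H. simpl. apply CI_zero. simpl. change Cadd with Cplus.
  rewrite (CI_plus (fun t => Csum n (fun i => g i t)) (g n)). rewrite IHn. reflexivity.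
  intros; apply H; lia. apply cc_Csum; intros; apply H; lia. apply H; lia. Qed.
Lemma CI_ext g h : (forall t, -PI <= t <= PI -> g t = h t) -> CI g = CI h.
Proof. intros H. unfold CI. f_equal; apply I_ext; intros; rewrite H; auto. Qed.

Lemma Cmod_CI g : cc g -> Cmod (CI g) <= I (fun t => Cmod (g t)).
Proof. intros Hg. set (v := CI g). destruct (Req_dec (Cmod v) 0) as [H0|H0].
  { rewrite H0. apply Rle_trans with (I (fun _ => 0)). rewrite I_const; lra. apply I_le. apply cont_const.
    apply cont_Cmod; auto. intros; apply Cmod_ge_0. }
  assert (Hp : 0 < Cmod v) by (assert (0 <= Cmod v) by apply Cmod_ge_0; lra).
  assert (Hre : Cmod v ^ 2 = fst (CI (fun t => Cmult (Cconj v) (g t)))).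
  { rewrite CI_mult by auto. fold v. rewrite Cmod2_alt. unfold Cmult, Cconj, Re, Im; simpl. ring. }
  assert (Hb : fst (CI (fun t => Cmult (Cconj v) (g t))) <= Cmod v * I (fun t => Cmod (g t))).
  { unfold CI; simpl. rewrite <- I_scal. apply I_le.
    destruct Hg as [H1 H2]. apply cont_minus; apply cont_mult; auto; apply cont_const.
    apply cont_mult. apply cont_const. apply cont_Cmod; auto.
    intros t _. eapply Rle_trans; [|rewrite <- Cmod_conj, <- Cmod_mult; apply Rle_refl].
    eapply Rle_trans; [apply Rle_abs|]. apply (re_le_Cmod (Cmult (Cconj v) (g t))).
    apply cont_Cmod; auto. }
  replace (Cmod v ^ 2) with (Cmod v * Cmod v) in Hre by ring. apply Rmult_le_reg_l with (Cmod v); auto. lra. Qed.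

Lemma E_add a b : E (a + b) = Cmult (E a) (E b).
Proof. unfold E, Cmult; simpl. rewrite cos_plus, sin_plus. f_equal; ring. Qed.
Lemma E_conj a : Cconj (E a) = E (- a).
Proof. unfold E, Cconj; simpl. rewrite cos_neg, sin_neg. auto. Qed.
Lemma Cmod_E a : Cmod (E a) = 1.
Proof. assert (H : cos a ^ 2 + sin a ^ 2 = 1) by (rewrite <- (sin2_cos2 a); unfold Rsqr; ring). unfold Cmod, E; simpl fst; simpl snd. rewrite H. apply sqrt_1. Qed.
Lemma E_0 : E 0 = RtoC 1.
Proof. unfold E, RtoC. rewrite cos_0, sin_0. auto. Qed.
Lemma E_eq a b : a = b -> E a = E b. Proof. intros ->; auto. Qed.

Lemma cont_is_continuous h x : continuity h -> continuous h x.
Proof. intros H. apply continuity_pt_filterlim. apply H. Qed.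

Lemma sin_int_PI k : sin (IZR k * PI) = 0.
Proof. apply sin_eq_0_1. exists k; auto. Qed.

Lemma I_cos_int m : m <> 0%Z -> I (fun t => cos (IZR m * t)) = 0.
Proof. intros Hm. assert (Hm' : IZR m <> 0) by (intro H; apply Hm; apply eq_IZR; auto).
  unfold I. apply is_RInt_unique.
  replace 0 with (minus (sin (IZR m * PI) / IZR m) (sin (IZR m * - PI) / IZR m)).
  apply (is_RInt_derive (fun t => sin (IZR m * t) / IZR m)).
  intros x _. auto_derive. auto. field; auto.
  intros x _. apply cont_is_continuous. apply cont_cos. apply cont_mult. apply cont_const. apply cont_id.
  unfold minus, plus, opp; simpl. replace (IZR m * - PI) with (IZR (- m) * PI) by (rewrite opp_IZR; ring).
  rewrite !sin_int_PI. field; auto. Qed.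

Lemma I_sin_int m : m <> 0%Z -> I (fun t => sin (IZR m * t)) = 0.
Proof. intros Hm. assert (Hm' : IZR m <> 0) by (intro H; apply Hm; apply eq_IZR; auto).
  unfold I. apply is_RInt_unique.
  replace 0 with (minus (- cos (IZR m * PI) / IZR m) (- cos (IZR m * - PI) / IZR m)).
  apply (is_RInt_derive (fun t => - cos (IZR m * t) / IZR m)).
  intros x _. auto_derive. auto. field; auto.
  intros x _. apply cont_is_continuous. apply cont_sin. apply cont_mult. apply cont_const. apply cont_id.
  unfold minus, plus, opp; simpl. replace (IZR m * - PI) with (- (IZR m * PI)) by ring.
  rewrite cos_neg. field; auto. Qed.

Lemma CI_E m : CI (fun t => E (IZR m * t)) = if Z.eqb m 0 then RtoC (2 * PI) else RtoC 0.
Proof. destruct (Z.eqb_spec m 0).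
  - rewrite e. rewrite (CI_ext _ (fun _ => RtoC 1)). rewrite CI_const. cring.
    intros t _. simpl IZR. rewrite Rmult_0_l. apply E_0.
  - unfold CI, E; simpl. rewrite I_cos_int, I_sin_int; auto. Qed.

Lemma Rint_I h : continuity h -> Rint h (- PI) PI = I h.
Proof. intros H. unfold Rint. destruct excluded_middle_informative as [e|e].
  - unfold I. rewrite (RInt_Reals h _ _ (proj1_sig (constructive_indefinite_description _ e))). auto.
  - exfalso. apply e. exists (continuity_implies_RiemannInt (f := h) (a := -PI) (b := PI) ltac:(assert (0 < PI) by apply PI_pos; lra) (fun x _ => H x)). auto. Qed.

Lemma fourier_CI f k : cc f -> fourier f k = Cmult (RtoC (/ (2 * PI))) (CI (fun t => Cmult (f t) (E (- (IZR k * t))))).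
Proof. intros [H1 H2]. assert (Hc : continuity (fun t => IZR k * t)) by (apply cont_mult; [apply cont_const|apply cont_id]).
  unfold fourier. rewrite !Rint_I.
  - unfold CI, Cmult, RtoC; simpl. assert (0 < PI) by apply PI_pos. f_equal.
    + rewrite (I_ext (fun t => fst (f t) * cos (- (IZR k * t)) - snd (f t) * sin (- (IZR k * t))) (fun t => fst (f t) * cos (IZR k * t) + snd (f t) * sin (IZR k * t))). field. lra.
      intros; rewrite cos_neg, sin_neg; ring.
    + rewrite (I_ext (fun t => fst (f t) * sin (- (IZR k * t)) + snd (f t) * cos (- (IZR k * t))) (fun t => snd (f t) * cos (IZR k * t) - fst (f t) * sin (IZR k * t))). field. lra.
      intros; rewrite cos_neg, sin_neg; ring.
  - apply cont_minus; apply cont_mult; auto. apply cont_cos; auto. apply cont_sin; auto.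
  - apply cont_plus; apply cont_mult; auto. apply cont_cos; auto. apply cont_sin; auto. Qed.

Lemma fourier_bound h k d : cc h -> (forall t, -PI <= t <= PI -> Cmod (h t) <= d) -> Cmod (fourier h k) <= d.
Proof. intros Hh Hd. assert (0 < PI) by apply PI_pos. rewrite fourier_CI by auto. rewrite Cmod_mult, Cmod_R.
  rewrite Rabs_pos_eq by (left; apply Rinv_0_lt_compat; lra).
  assert (Hcc : cc (fun t => Cmult (h t) (E (- (IZR k * t))))).
  { apply cc_mult; auto. apply cc_E. apply cont_opp, cont_mult; [apply cont_const|apply cont_id]. }
  eapply Rle_trans. apply Rmult_le_compat_l. left; apply Rinv_0_lt_compat; lra. apply Cmod_CI; auto.
  assert (I (fun t => Cmod (Cmult (h t) (E (- (IZR k * t))))) <= I (fun _ => d)).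
  { apply I_le. apply cont_Cmod; auto. apply cont_const. intros. rewrite Cmod_mult, Cmod_E, Rmult_1_r; auto. }
  rewrite I_const in H0. apply Rmult_le_reg_l with (2 * PI). lra. field_simplify; lra. Qed.

Lemma cont_pow2 f : continuity f -> continuity (fun t => f t ^ 2).
Proof. intros. replace (fun t => f t ^ 2) with (fun t => f t * f t) by (apply functional_extensionality; intros; ring). apply cont_mult; auto. Qed.
Definition Ytp n (u : nat -> Cpx) t := Csum n (fun i => Cmult (u i) (E (INR i * t))).
Lemma cc_Ytp n u : cc (Ytp n u).
Proof. unfold Ytp. apply (cc_Csum n (fun i t => Cmult (u i) (E (INR i * t)))). intros. apply cc_mult. apply cc_const.
  apply cc_E. apply cont_mult; [apply cont_const|apply cont_id]. Qed.

Lemma prod_sums n m a b : Cmult (Csum n a) (Csum m b) = Csum n (fun i => Csum m (fun j => Cmult (a i) (b j))).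
Proof. rewrite <- Csum_mulr. apply Csum_ext; intros. rewrite Csum_mull. auto. Qed.

Lemma cc_hE h c : cc h -> cc (fun t => Cmult (h t) (E (c * t))).
Proof. intros. apply cc_mult; auto. apply cc_E. apply cont_mult; [apply cont_const|apply cont_id]. Qed.

Lemma bilin n h u v : cc h ->
  CI (fun t => Cmult (h t) (Cmult (Cconj (Ytp n u t)) (Ytp n v t))) =
  Csum n (fun i => Csum n (fun j => Cmult (Cmult (Cconj (u i)) (v j)) (CI (fun t => Cmult (h t) (E ((INR j - INR i) * t)))))).
Proof. intros Hh.
  rewrite (CI_ext _ (fun t => Csum n (fun i => Csum n (fun j => Cmult (Cmult (Cconj (u i)) (v j)) (Cmult (h t) (E ((INR j - INR i) * t))))))).
  - rewrite (CI_Csum n (fun i t => Csum n (fun j => Cmult (Cmult (Cconj (u i)) (v j)) (Cmult (h t) (E ((INR j - INR i) * t)))))).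
    apply Csum_ext; intros i Hi.
    rewrite (CI_Csum n (fun j t => Cmult (Cmult (Cconj (u i)) (v j)) (Cmult (h t) (E ((INR j - INR i) * t))))).
    apply Csum_ext; intros j Hj. apply CI_mult. apply cc_hE; auto.
    intros; apply cc_mult. apply cc_const. apply cc_hE; auto.
    intros; apply (cc_Csum n (fun j t => Cmult (Cmult (Cconj (u i)) (v j)) (Cmult (h t) (E ((INR j - INR i) * t))))).
    intros; apply cc_mult. apply cc_const. apply cc_hE; auto.
  - intros t _. unfold Ytp. rewrite Csum_conj, prod_sums, <- Csum_mull. apply Csum_ext; intros i Hi.
    rewrite <- Csum_mull. apply Csum_ext; intros j Hj. rewrite Cmult_conj, E_conj.
    rewrite (E_eq ((INR j - INR i) * t) (- (INR i * t) + INR j * t)) by ring. rewrite E_add. cring. Qed.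

Lemma INR_diff_IZR (i j : nat) : INR j - INR i = IZR (Z.of_nat j - Z.of_nat i).
Proof. rewrite minus_IZR, <- !INR_IZR_INZ. auto. Qed.

Lemma parseval n x : I (fun t => Cmod (Ytp n x t) ^ 2) = 2 * PI * nsq n x.
Proof. assert (H : I (fun t => Cmod (Ytp n x t) ^ 2) = fst (CI (fun t => Cmult (RtoC 1) (Cmult (Cconj (Ytp n x t)) (Ytp n x t))))).
  { unfold CI; simpl fst. apply I_ext. intros t _. rewrite Cmod2_alt. unfold Re, Im. destruct (Ytp n x t). simpl. ring. }
  rewrite H, bilin by apply cc_const.
  rewrite (Csum_ext n _ (fun i => Cmult (Cmult (Cconj (x i)) (x i)) (RtoC (2 * PI)))).
  - rewrite Csum_pair. simpl. unfold nsq. rewrite <- Rsumn_scal. apply Rsumn_ext; intros. unfold Cmod2, Cconj. simpl. ring.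
  - intros i Hi. rewrite (Csum_ext n _ (fun j => if Nat.eqb j i then Cmult (Cmult (Cconj (x i)) (x i)) (RtoC (2 * PI)) else RtoC 0)).
    apply Csum_single; auto.
    intros j Hj. rewrite (CI_ext _ (fun t => E (IZR (Z.of_nat j - Z.of_nat i) * t))).
    rewrite CI_E. destruct (Nat.eqb_spec j i); destruct (Z.eqb_spec (Z.of_nat j - Z.of_nat i) 0); try lia.
    subst; auto. cring.
    intros t _. rewrite <- INR_diff_IZR. cring. Qed.

Definition toepM (a : Z -> Cpx) : mat := fun i j => a (Z.of_nat i - Z.of_nat j)%Z.

Lemma toep_ip n g y x : cc g -> ip n y (mvec n (toepM (fourier g)) x) =
  Cmult (RtoC (/ (2 * PI))) (CI (fun t => Cmult (g t) (Cmult (Cconj (Ytp n y t)) (Ytp n x t)))).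
Proof. intros Hg. rewrite bilin by auto. rewrite <- Csum_mull. unfold ip, mvec. apply Csum_ext; intros i Hi.
  rewrite <- !Csum_mull. apply Csum_ext; intros j Hj. unfold toepM. rewrite fourier_CI by auto.
  rewrite (CI_ext (fun t => Cmult (g t) (E (- (IZR (Z.of_nat i - Z.of_nat j) * t)))) (fun t => Cmult (g t) (E ((INR j - INR i) * t)))).
  change Cmul with Cmult. cring.
  intros t _. f_equal. apply E_eq. rewrite minus_IZR, <- !INR_IZR_INZ. ring. Qed.

Lemma toep_qb n g d : cc g -> (forall t, -PI <= t <= PI -> Cmod (g t) <= d) -> qb n (toepM (fourier g)) d.
Proof. intros Hg Hd x y lam Hl. assert (HP : 0 < PI) by apply PI_pos. rewrite toep_ip by auto.
  rewrite Cmod_mult, Cmod_R, Rabs_pos_eq by (left; apply Rinv_0_lt_compat; lra).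
  assert (Hcc : cc (fun t => Cmult (g t) (Cmult (Cconj (Ytp n y t)) (Ytp n x t)))).
  { apply cc_mult; auto. apply cc_mult. apply cc_conj, cc_Ytp. apply cc_Ytp. }
  assert (Hy := cont_Cmod _ (cc_Ytp n y)). assert (Hx := cont_Cmod _ (cc_Ytp n x)).
  assert (Hb : I (fun t => Cmod (Cmult (g t) (Cmult (Cconj (Ytp n y t)) (Ytp n x t)))) <=
     I (fun t => d / 2 * (lam * Cmod (Ytp n y t) ^ 2 + / lam * Cmod (Ytp n x t) ^ 2))).
  { apply I_le. apply cont_Cmod; auto.
    apply cont_mult. apply cont_const. apply cont_plus; apply cont_mult; try apply cont_const; apply cont_mult; auto;
      apply cont_mult; auto; apply cont_const.
    intros t Ht. rewrite !Cmod_mult, Cmod_conj. assert (Hdt := Hd t Ht). assert (0 <= Cmod (g t)) by apply Cmod_ge_0.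
    assert (HA := amgm (Cmod (Ytp n y t)) (Cmod (Ytp n x t)) lam Hl).
    assert (0 <= Cmod (Ytp n y t) * Cmod (Ytp n x t)) by (apply Rmult_le_pos; apply Cmod_ge_0).
    apply Rle_trans with (d * (Cmod (Ytp n y t) * Cmod (Ytp n x t))). apply Rmult_le_compat_r; auto.
    unfold Rdiv in *. assert (0 <= d) by (assert (0 <= Cmod (g t)) by apply Cmod_ge_0; lra).
    replace (d * / 2 * (lam * Cmod (Ytp n y t) ^ 2 + / lam * Cmod (Ytp n x t) ^ 2)) with (d * ((lam * Cmod (Ytp n y t) ^ 2 + Cmod (Ytp n x t) ^ 2 * / lam) * / 2)) by ring.
    apply Rmult_le_compat_l; auto. }
  assert (Hy2 : continuity (fun t => Cmod (Ytp n y t) ^ 2)) by (apply cont_pow2; auto).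
  assert (Hx2 : continuity (fun t => Cmod (Ytp n x t) ^ 2)) by (apply cont_pow2; auto).
  assert (Hy3 : continuity (fun t => lam * Cmod (Ytp n y t) ^ 2)) by (apply cont_mult; auto; apply cont_const).
  assert (Hx3 : continuity (fun t => / lam * Cmod (Ytp n x t) ^ 2)) by (apply cont_mult; auto; apply cont_const).
  rewrite I_scal in Hb by (apply cont_plus; auto). rewrite I_plus in Hb by auto. rewrite !I_scal in Hb by auto.
  rewrite !parseval in Hb.
  eapply Rle_trans. apply Rmult_le_compat_l. left; apply Rinv_0_lt_compat; lra. eapply Rle_trans. apply Cmod_CI; auto. exact Hb.
  right. field. lra. Qed.

From Stdlib Require Import Setoid Morphisms.
#[export] Instance Csum_proper n : Proper (pointwise_relation nat eq ==> eq) (Csum n).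
Proof. intros f g H. apply Csum_ext; intros; apply H. Qed.
Definition ccoef n (a : Z -> Cpx) (k : nat) : Cpx :=
  Cscale (1 / INR n) (Cadd (Cscale (INR (n - k)) (a (Z.of_nat k))) (Cscale (INR k) (a (Z.of_nat k - Z.of_nat n)%Z))).
Definition circM n (a : Z -> Cpx) : mat :=
  fun j k => ccoef n a (Z.to_nat (Z.modulo (Z.of_nat j - Z.of_nat k) (Z.of_nat n))).
Lemma opt_circ_eq n f : opt_circ n f = circM n (fourier f). Proof. reflexivity. Qed.
Lemma toeplitz_eq n f : toeplitz n f = toepM (fourier f). Proof. reflexivity. Qed.

Definition sh n s i := if Nat.ltb (i + s) n then (i + s)%nat else (i + s - n)%nat.
Definition shinv n s i := if Nat.leb s i then (i - s)%nat else (i + n - s)%nat.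
Lemma sh_lo n s i : (i + s < n)%nat -> sh n s i = (i + s)%nat.
Proof. intros. unfold sh. destruct (Nat.ltb_spec (i + s) n); lia. Qed.
Lemma sh_hi n s i : (n <= i + s)%nat -> sh n s i = (i + s - n)%nat.
Proof. intros. unfold sh. destruct (Nat.ltb_spec (i + s) n); lia. Qed.
Lemma sh_lt n s i : (s < n)%nat -> (i < n)%nat -> (sh n s i < n)%nat.
Proof. intros. unfold sh. destruct (Nat.ltb_spec (i + s) n); lia. Qed.
Lemma sh_shinv n s i : (s < n)%nat -> (i < n)%nat -> sh n s (shinv n s i) = i.
Proof. intros. unfold sh, shinv. destruct (Nat.leb_spec s i). destruct (Nat.ltb_spec (i - s + s) n); lia. destruct (Nat.ltb_spec (i + n - s + s) n); lia. Qed.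

Lemma Csum_sh n s h : (s < n)%nat -> Csum n (fun i => h (sh n s i)) = Csum n h.
Proof. intros Hs.
  assert (E2 : Csum n h = Cplus (Csum s h) (Csum (n - s) (fun i => h (s + i)%nat))).
  { replace n with (s + (n - s))%nat at 1 by lia. apply Csum_add. }
  replace n with ((n - s) + s)%nat at 1 by lia. rewrite Csum_add. rewrite E2.
  rewrite (Csum_ext (n - s) _ (fun i => h (s + i)%nat)).
  rewrite (Csum_ext s (fun i => h (sh n s (n - s + i)%nat)) h). cring.
  intros i Hi. unfold sh. destruct (Nat.ltb_spec (n - s + i + s) n). lia. f_equal; lia.
  intros i Hi. unfold sh. destruct (Nat.ltb_spec (i + s) n). f_equal; lia. lia. Qed.
Lemma Rsumn_sh n s h : (s < n)%nat -> Rsumn n (fun i => h (sh n s i)) = Rsumn n h.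
Proof. intros Hs. assert (H := Csum_sh n s (fun i => RtoC (h i)) Hs). rewrite !Csum_pair in H.
  simpl in H. injection H; auto. Qed.

Lemma Csum_const_ext n c g : (forall i, (i < n)%nat -> g i = c) -> Csum n g = Cmult (RtoC (INR n)) c.
Proof. intros H. rewrite (Csum_ext n g (fun _ => c)) by auto. apply Csum_const. Qed.

Lemma circ_entry n a i j : (0 < n)%nat -> (i < n)%nat -> (j < n)%nat ->
  circM n a i j = Cmult (RtoC (/ INR n)) (Csum n (fun s => a (Z.of_nat (sh n s i) - Z.of_nat (sh n s j))%Z)).
Proof. intros Hn Hi Hj. assert (Hn' : 0 < INR n) by (apply lt_0_INR; lia). unfold circM, ccoef.
  destruct (le_lt_dec j i) as [Hji|Hij].
  - rewrite Z.mod_small by lia. replace (Z.to_nat (Z.of_nat i - Z.of_nat j)) with (i - j)%nat by lia.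
    set (F := fun s => a (Z.of_nat (sh n s i) - Z.of_nat (sh n s j))%Z).
    assert (HF : Csum n F = Cplus (Cplus (Csum (n - i) F) (Csum (i - j) (fun q => F (n - i + q)%nat))) (Csum j (fun q => F (n - i + (i - j) + q)%nat))).
    { replace n with ((n - i) + (i - j) + j)%nat at 1 by lia. rewrite !Csum_add. reflexivity. }
    rewrite HF. unfold F.
    rewrite (Csum_const_ext (n - i) (a (Z.of_nat (i - j)))).
    rewrite (Csum_const_ext (i - j) (a (Z.of_nat (i - j) - Z.of_nat n)%Z)).
    rewrite (Csum_const_ext j (a (Z.of_nat (i - j)))).
    + destruct (a (Z.of_nat (i - j))) as [p1 p2]. destruct (a (Z.of_nat (i - j) - Z.of_nat n)%Z) as [q1 q2].
      unfold Cscale, Cadd, Cmult, Cplus, RtoC; simpl. rewrite !minus_INR by lia. f_equal; field; lra.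
    + intros q Hq. rewrite (sh_hi n _ i) by lia. rewrite (sh_hi n _ j) by lia. f_equal; lia.
    + intros q Hq. rewrite (sh_hi n _ i) by lia. rewrite (sh_lo n _ j) by lia. f_equal; lia.
    + intros q Hq. rewrite (sh_lo n _ i) by lia. rewrite (sh_lo n _ j) by lia. f_equal; lia.
  - replace ((Z.of_nat i - Z.of_nat j) mod Z.of_nat n)%Z with (Z.of_nat i - Z.of_nat j + Z.of_nat n)%Z.
    2:{ rewrite <- (Z_mod_plus_full (Z.of_nat i - Z.of_nat j) 1). rewrite Z.mod_small; lia. }
    replace (Z.to_nat (Z.of_nat i - Z.of_nat j + Z.of_nat n)) with (n + i - j)%nat by lia.
    set (F := fun s => a (Z.of_nat (sh n s i) - Z.of_nat (sh n s j))%Z).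
    assert (HF : Csum n F = Cplus (Cplus (Csum (n - j) F) (Csum (j - i) (fun q => F (n - j + q)%nat))) (Csum i (fun q => F (n - j + (j - i) + q)%nat))).
    { replace n with ((n - j) + (j - i) + i)%nat at 1 by lia. rewrite !Csum_add. reflexivity. }
    rewrite HF. unfold F.
    rewrite (Csum_const_ext (n - j) (a (Z.of_nat (n + i - j) - Z.of_nat n)%Z)).
    rewrite (Csum_const_ext (j - i) (a (Z.of_nat (n + i - j)))).
    rewrite (Csum_const_ext i (a (Z.of_nat (n + i - j) - Z.of_nat n)%Z)).
    + destruct (a (Z.of_nat (n + i - j))) as [p1 p2]. destruct (a (Z.of_nat (n + i - j) - Z.of_nat n)%Z) as [q1 q2].
      unfold Cscale, Cadd, Cmult, Cplus, RtoC; simpl. rewrite !minus_INR by lia. rewrite plus_INR. f_equal; field; lra.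
    + intros q Hq. rewrite (sh_hi n _ i) by lia. rewrite (sh_hi n _ j) by lia. f_equal; lia.
    + intros q Hq. rewrite (sh_lo n _ i) by lia. rewrite (sh_hi n _ j) by lia. f_equal; lia.
    + intros q Hq. rewrite (sh_lo n _ i) by lia. rewrite (sh_lo n _ j) by lia. f_equal; lia.
Qed.

Lemma shinv_sh n s i : (s < n)%nat -> (i < n)%nat -> shinv n s (sh n s i) = i.
Proof. intros. unfold sh, shinv. destruct (Nat.ltb_spec (i + s) n).
  destruct (Nat.leb_spec s (i + s)); lia. destruct (Nat.leb_spec s (i + s - n)); lia. Qed.

Lemma circ_qb n a d : (0 < n)%nat -> qb n (toepM a) d -> qb n (circM n a) d.
Proof. intros Hn HT x y lam Hl. assert (Hn' : 0 < INR n) by (apply lt_0_INR; lia).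
  set (ys := fun s k => y (shinv n s k)). set (xs := fun s k => x (shinv n s k)).
  set (A := fun s i j => a (Z.of_nat (sh n s i) - Z.of_nat (sh n s j))%Z).
  assert (Hs : forall s, (s < n)%nat -> ip n (ys s) (mvec n (toepM a) (xs s)) =
     Csum n (fun i => Cmult (Cconj (y i)) (Csum n (fun j => Cmult (A s i j) (x j))))).
  { intros s Hsn. unfold ip, mvec. rewrite <- (Csum_sh n s) by auto. apply Csum_ext; intros i Hi.
    unfold ys. rewrite shinv_sh by auto. f_equal. rewrite <- (Csum_sh n s) by auto. apply Csum_ext; intros j Hj.
    unfold xs, toepM, A. rewrite shinv_sh by auto. reflexivity. }
  assert (Hip : ip n y (mvec n (circM n a) x) = Cmult (RtoC (/ INR n)) (Csum n (fun s => ip n (ys s) (mvec n (toepM a) (xs s))))).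
  { rewrite (Csum_ext n _ _ Hs). unfold ip, mvec. rewrite <- Csum_mull.
    setoid_rewrite <- Csum_mull.
    rewrite (Csum_swap n n (fun s i => Cmult (RtoC (/ INR n)) (Cmult (Cconj (y i)) (Csum n (fun j => Cmult (A s i j) (x j)))))).
    apply Csum_ext; intros i Hi.
    setoid_rewrite <- Csum_mull. setoid_rewrite <- Csum_mull.
    rewrite (Csum_swap n n (fun s j => Cmult (RtoC (/ INR n)) (Cmult (Cconj (y i)) (Cmult (A s i j) (x j))))).
    apply Csum_ext; intros j Hj. change Cmul with Cmult. rewrite circ_entry by auto.
    rewrite <- !Csum_mull, <- Csum_mulr, <- Csum_mull. apply Csum_ext; intros s Hs'. unfold A. cring. }
  rewrite Hip, Cmod_mult, Cmod_R, Rabs_pos_eq by (left; apply Rinv_0_lt_compat; lra).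
  eapply Rle_trans. apply Rmult_le_compat_l. left; apply Rinv_0_lt_compat; lra. apply Cmod_Csum.
  eapply Rle_trans. apply Rmult_le_compat_l. left; apply Rinv_0_lt_compat; lra. apply Rsumn_le. intros s0 Hsn. apply (HT _ _ lam Hl).
  assert (Hny : forall s, (s < n)%nat -> nsq n (ys s) = nsq n y).
  { intros s1 Hs1. unfold nsq. rewrite <- (Rsumn_sh n s1) by auto. apply Rsumn_ext; intros i1 Hi1. unfold ys. rewrite shinv_sh; auto. }
  assert (Hnx : forall s, (s < n)%nat -> nsq n (xs s) = nsq n x).
  { intros s1 Hs1. unfold nsq. rewrite <- (Rsumn_sh n s1) by auto. apply Rsumn_ext; intros i1 Hi1. unfold xs. rewrite shinv_sh; auto. }
  rewrite (Rsumn_ext n _ (fun _ => d / 2 * (lam * nsq n y + nsq n x / lam))). rewrite Rsumn_const.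
  right. field. lra. intros s Hsn. rewrite Hny, Hnx; auto. Qed.

Lemma Cmod_le_sum z : Cmod z <= Rabs (fst z) + Rabs (snd z).
Proof. unfold Cmod. rewrite <- (sqrt_pow2 (Rabs (fst z) + Rabs (snd z))) by (assert (0 <= Rabs (fst z)) by apply Rabs_pos; assert (0 <= Rabs (snd z)) by apply Rabs_pos; lra).
  apply sqrt_le_1_alt. assert (0 <= Rabs (fst z)) by apply Rabs_pos; assert (0 <= Rabs (snd z)) by apply Rabs_pos.
  rewrite <- (pow2_abs (fst z)), <- (pow2_abs (snd z)). simpl. nra. Qed.

Lemma cos_close s d : 0 < d <= PI -> -2 * PI <= s <= 2 * PI -> cos d < cos s ->
  Rabs s < d \/ Rabs (s - 2 * PI) < d \/ Rabs (s + 2 * PI) < d.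
Proof. intros Hd Hs Hc. assert (HP : 0 < PI) by apply PI_pos.
  assert (Hpos : forall u, 0 <= u <= PI -> cos d < cos u -> u < d).
  { intros u Hu Hcu. destruct (Rlt_le_dec u d); auto. exfalso. destruct (Req_dec u d). subst; lra.
    assert (cos u < cos d) by (apply cos_decreasing_1; lra). lra. }
  assert (Hrefl : forall u, cos (2 * PI - u) = cos u) by (intros; rewrite cos_minus, cos_2PI, sin_2PI; ring).
  destruct (Rle_dec 0 s).
  - destruct (Rle_dec s PI).
    + left. rewrite Rabs_pos_eq by lra. apply Hpos; auto; lra.
    + right; left. rewrite Rabs_left1 by lra. assert (2 * PI - s < d). apply Hpos. lra. rewrite Hrefl; auto. lra.
  - destruct (Rle_dec (-PI) s).
    + left. rewrite Rabs_left1 by lra. apply Hpos. lra. rewrite cos_neg; auto.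
    + right; right. rewrite Rabs_pos_eq by lra. assert (2 * PI - (- s) < d). apply Hpos. lra. rewrite Hrefl, cos_neg; auto. lra. Qed.

Definition periodic (f : R -> Cpx) := forall t, f (t + 2 * PI) = f t.

Lemma unif_cont f : cc f -> periodic f -> forall eta, 0 < eta -> exists kap, 0 < kap /\
  forall th t, -PI <= th <= PI -> -PI <= t <= PI -> 1 - cos (th - t) < kap -> Cmod (Cminus (f th) (f t)) <= eta.
Proof. intros [H1 H2] Hp eta Heta. assert (HP : 0 < PI) by apply PI_pos.
  set (X := fun c => -3 * PI <= c <= 3 * PI).
  assert (U1 := Heine _ X (compact_P3 _ _) (fun x _ => H1 x)).
  assert (U2 := Heine _ X (compact_P3 _ _) (fun x _ => H2 x)).
  destruct (U1 (mkposreal (eta / 2) ltac:(lra))) as [d1 Hd1]. destruct (U2 (mkposreal (eta / 2) ltac:(lra))) as [d2 Hd2].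
  simpl in *. set (d := Rmin (Rmin d1 d2) PI).
  assert (Hd : 0 < d <= PI). { unfold d. split. apply Rmin_glb_lt. apply Rmin_glb_lt; apply cond_pos. auto. apply Rmin_r. }
  assert (Hdd1 : d <= d1) by (unfold d; eapply Rle_trans; [apply Rmin_l|apply Rmin_l]).
  assert (Hdd2 : d <= d2) by (unfold d; eapply Rle_trans; [apply Rmin_l|apply Rmin_r]).
  exists (1 - cos d). split.
  { assert (cos d < cos 0) by (apply cos_decreasing_1; lra). rewrite cos_0 in H. lra. }
  intros th t Hth Ht Hc.
  assert (Hgen : forall u, X th -> X u -> Rabs (th - u) < d -> Cmod (Cminus (f th) (f u)) <= eta).
  { intros u Xth Xu Hu. eapply Rle_trans. apply Cmod_le_sum. simpl.
    assert (A1 := Hd1 th u Xth Xu ltac:(lra)). assert (A2 := Hd2 th u Xth Xu ltac:(lra)).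
    unfold Rminus in A1, A2. lra. }
  assert (Xth : X th) by (unfold X; lra).
  destruct (cos_close (th - t) d Hd ltac:(lra) ltac:(lra)) as [C|[C|C]].
  - apply Hgen; auto. unfold X; lra.
  - rewrite <- (Hp t). apply Hgen; auto. unfold X; lra. replace (th - (t + 2 * PI)) with (th - t - 2 * PI) by ring; auto.
  - replace (f t) with (f (t - 2 * PI)) by (rewrite <- (Hp (t - 2 * PI)); f_equal; ring).
    apply Hgen; auto. unfold X; lra. replace (th - (t - 2 * PI)) with (th - t + 2 * PI) by ring; auto. Qed.

Definition one : nat -> Cpx := fun _ => RtoC 1.
Definition SL L s := Ytp L one s.

Lemma SL_geom L s : Cmult (SL L s) (Cminus (E s) (RtoC 1)) = Cminus (E (INR L * s)) (RtoC 1).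
Proof. induction L.
  - unfold SL, Ytp. simpl Csum. simpl INR. rewrite Rmult_0_l, E_0. cring.
  - unfold SL, Ytp in *. simpl Csum. change Cadd with Cplus.
    replace (Cmult (Cplus (Csum L (fun i => Cmult (one i) (E (INR i * s)))) (Cmult (one L) (E (INR L * s)))) (Cminus (E s) (RtoC 1)))
      with (Cplus (Cmult (Csum L (fun i => Cmult (one i) (E (INR i * s)))) (Cminus (E s) (RtoC 1))) (Cminus (Cmult (E (INR L * s)) (E s)) (E (INR L * s)))) by (unfold one; cring).
    rewrite IHL. rewrite <- E_add. rewrite S_INR. rewrite (E_eq ((INR L + 1) * s) (INR L * s + s)) by ring. cring. Qed.

Lemma Cmod_Em1 s : Cmod (Cminus (E s) (RtoC 1)) ^ 2 = 2 - 2 * cos s.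
Proof. rewrite Cmod2_alt. unfold Re, Im, E, Cminus, Cplus, Complex.Copp, RtoC; simpl.
  assert (H := sin2_cos2 s). unfold Rsqr in H. nra. Qed.

Lemma SL_bound L s : cos s < 1 -> Cmod (SL L s) ^ 2 <= 4 / (2 - 2 * cos s).
Proof. intros Hc. assert (H := f_equal (fun z => Cmod z) (SL_geom L s)). cbv beta in H. rewrite Cmod_mult in H.
  assert (H2 : Cmod (SL L s) ^ 2 * (2 - 2 * cos s) = 2 - 2 * cos (INR L * s)).
  { rewrite <- !Cmod_Em1. rewrite <- Rpow_mult_distr, H. auto. }
  assert (cos (INR L * s) >= -1) by (assert (H3 := COS_bound (INR L * s)); lra).
  apply Rmult_le_reg_r with (2 - 2 * cos s). lra. unfold Rdiv. rewrite Rmult_assoc, Rinv_l by lra. lra. Qed.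

Lemma cc_hEphi h c phi : cc h -> continuity phi -> cc (fun t => Cmult (h t) (E (c * phi t))).
Proof. intros. apply cc_mult; auto. apply cc_E. apply cont_mult; auto. apply cont_const. Qed.

Lemma bilin_gen n h u v phi : cc h -> continuity phi ->
  CI (fun t => Cmult (h t) (Cmult (Cconj (Ytp n u (phi t))) (Ytp n v (phi t)))) =
  Csum n (fun i => Csum n (fun j => Cmult (Cmult (Cconj (u i)) (v j)) (CI (fun t => Cmult (h t) (E ((INR j - INR i) * phi t)))))).
Proof. intros Hh Hphi.
  rewrite (CI_ext _ (fun t => Csum n (fun i => Csum n (fun j => Cmult (Cmult (Cconj (u i)) (v j)) (Cmult (h t) (E ((INR j - INR i) * phi t))))))).
  - rewrite (CI_Csum n (fun i t => Csum n (fun j => Cmult (Cmult (Cconj (u i)) (v j)) (Cmult (h t) (E ((INR j - INR i) * phi t)))))).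
    apply Csum_ext; intros i Hi.
    rewrite (CI_Csum n (fun j t => Cmult (Cmult (Cconj (u i)) (v j)) (Cmult (h t) (E ((INR j - INR i) * phi t))))).
    apply Csum_ext; intros j Hj. apply CI_mult. apply cc_hEphi; auto.
    intros; apply cc_mult. apply cc_const. apply cc_hEphi; auto.
    intros; apply (cc_Csum n (fun j t => Cmult (Cmult (Cconj (u i)) (v j)) (Cmult (h t) (E ((INR j - INR i) * phi t))))).
    intros; apply cc_mult. apply cc_const. apply cc_hEphi; auto.
  - intros t _. unfold Ytp. rewrite Csum_conj, prod_sums, <- Csum_mull. apply Csum_ext; intros i Hi.
    rewrite <- Csum_mull. apply Csum_ext; intros j Hj. rewrite Cmult_conj, E_conj.
    rewrite (E_eq ((INR j - INR i) * phi t) (- (INR i * phi t) + INR j * phi t)) by ring. rewrite E_add. cring. Qed.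

Lemma cont_shift th : continuity (fun t => th - t).
Proof. apply cont_minus. apply cont_const. apply cont_id. Qed.

Lemma kexp L h th : cc h ->
  CI (fun t => Cmult (h t) (Cmult (Cconj (SL L (th - t))) (SL L (th - t)))) =
  Csum L (fun i => Csum L (fun j => Cmult (E ((INR j - INR i) * th)) (CI (fun t => Cmult (h t) (E (- (IZR (Z.of_nat j - Z.of_nat i) * t))))))).
Proof. intros Hh. unfold SL. rewrite (bilin_gen L h one one (fun t => th - t) Hh (cont_shift th)).
  apply Csum_ext; intros i Hi. apply Csum_ext; intros j Hj.
  rewrite (CI_ext _ (fun t => Cmult (E ((INR j - INR i) * th)) (Cmult (h t) (E (- (IZR (Z.of_nat j - Z.of_nat i) * t)))))).
  rewrite CI_mult. unfold one. replace (Cconj (RtoC 1)) with (RtoC 1) by (unfold Cconj, RtoC; simpl; f_equal; ring). cring.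
  apply cc_mult; auto. apply cc_E. apply cont_opp, cont_mult. apply cont_const. apply cont_id.
  intros t _. rewrite minus_IZR, <- !INR_IZR_INZ.
  rewrite (E_eq ((INR j - INR i) * (th - t)) ((INR j - INR i) * th + - ((INR j - INR i) * t))) by ring.
  rewrite E_add. cring. Qed.

Lemma CI_Eneg m : CI (fun t => E (- (IZR m * t))) = if Z.eqb m 0 then RtoC (2 * PI) else RtoC 0.
Proof. rewrite (CI_ext _ (fun t => E (IZR (- m) * t))). rewrite CI_E.
  destruct (Z.eqb_spec (- m) 0); destruct (Z.eqb_spec m 0); auto; lia.
  intros t _. apply E_eq. rewrite opp_IZR. ring. Qed.

Lemma CI_fE f k : cc f -> CI (fun t => Cmult (f t) (E (- (IZR k * t)))) = Cmult (RtoC (2 * PI)) (fourier f k).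
Proof. intros Hf. rewrite fourier_CI by auto. assert (0 < PI) by apply PI_pos.
  destruct (CI (fun t => Cmult (f t) (E (- (IZR k * t))))) as [c1 c2]. unfold Cmult, RtoC; simpl. f_equal; field; lra. Qed.

Definition Gk L th t := Cmult (Cconj (SL L (th - t))) (SL L (th - t)).
Lemma cc_Gk L th : cc (Gk L th).
Proof. unfold Gk, SL. assert (H : cc (fun t => Ytp L one (th - t))).
  { destruct (cc_Ytp L one) as [H1 H2]. split. apply (cont_comp (fun t => th - t) (fun u => fst (Ytp L one u))); auto; apply cont_shift. apply (cont_comp (fun t => th - t) (fun u => snd (Ytp L one u))); auto; apply cont_shift. }
  apply cc_mult; auto. apply (cc_conj (fun t => Ytp L one (th - t))); auto. Qed.

Lemma Gk_mod L th t : Cmod (Gk L th t) = Cmod (SL L (th - t)) ^ 2.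
Proof. unfold Gk. rewrite Cmod_mult, Cmod_conj. ring. Qed.
Lemma Gk_re L th t : fst (Gk L th t) = Cmod (SL L (th - t)) ^ 2.
Proof. unfold Gk. rewrite Cmod2_alt. unfold Re, Im. destruct (SL L (th - t)). unfold Cmult, Cconj; simpl. ring. Qed.

Lemma CI_Gk L th : CI (Gk L th) = RtoC (2 * PI * INR L).
Proof. rewrite (CI_ext _ (fun t => Cmult (RtoC 1) (Gk L th t))) by (intros; cring).
  unfold Gk. rewrite kexp by apply cc_const.
  rewrite (Csum_ext L _ (fun i => RtoC (2 * PI))). rewrite Csum_const. unfold Cmult, RtoC; simpl; f_equal; ring.
  intros i Hi. rewrite (Csum_ext L _ (fun j => if Nat.eqb j i then RtoC (2 * PI) else RtoC 0)). apply Csum_single; auto.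
  intros j Hj. rewrite (CI_ext _ (fun t => E (- (IZR (Z.of_nat j - Z.of_nat i) * t)))) by (intros; cring).
  rewrite CI_Eneg. destruct (Nat.eqb_spec j i); destruct (Z.eqb_spec (Z.of_nat j - Z.of_nat i) 0); try lia.
  subst. rewrite Rminus_diag, Rmult_0_l, E_0. cring. cring. Qed.

Lemma CI_minus g h : cc g -> cc h -> CI (fun t => Cminus (g t) (h t)) = Cminus (CI g) (CI h).
Proof. intros [H1 H2] [H3 H4]. unfold CI, Cminus, Cplus, Complex.Copp; simpl. f_equal.
  rewrite (I_ext _ (fun t => fst (g t) - fst (h t))) by (intros; ring). rewrite I_minus by auto. ring.
  rewrite (I_ext _ (fun t => snd (g t) - snd (h t))) by (intros; ring). rewrite I_minus by auto. ring. Qed.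

Lemma fejer f : cc f -> periodic f -> forall eta, 0 < eta -> exists L p, (1 <= L)%nat /\ cc p /\
  (forall th, -PI <= th <= PI -> Cmod (Cminus (f th) (p th)) <= eta) /\
  (forall k, (Z.of_nat L <= Z.abs k)%Z -> fourier p k = RtoC 0).
Proof. intros Hf Hper eta Heta. assert (HP : 0 < PI) by apply PI_pos.
  destruct (continuity_ab_maj (fun t => Cmod (f t)) (-PI) PI ltac:(lra) (fun c _ => cont_Cmod f Hf c)) as [Mx [HMx _]].
  set (F0 := Cmod (f Mx)). assert (HF0 : 0 <= F0) by apply Cmod_ge_0.
  destruct (unif_cont f Hf Hper (eta / 2) ltac:(lra)) as [kap [Hk Hu]].
  destruct (nat_unbounded (8 * F0 / (kap * eta) + 1)) as [L HL].
  assert (HL1 : 1 <= INR L). { assert (0 <= 8 * F0 / (kap * eta)). apply Rmult_le_pos. lra. left; apply Rinv_0_lt_compat; nra. lra. }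
  assert (HL0 : (1 <= L)%nat). { destruct L. simpl in HL1; lra. lia. }
  assert (HLp : 0 < INR L) by lra.
  set (a := fourier f).
  set (p := fun th => Cmult (RtoC (/ INR L)) (Csum L (fun i => Csum L (fun j => Cmult (a (Z.of_nat j - Z.of_nat i)%Z) (E ((INR j - INR i) * th)))))).
  assert (Hcp : cc p).
  { unfold p. apply cc_mult. apply cc_const. apply (cc_Csum L (fun i th => Csum L (fun j => Cmult (a (Z.of_nat j - Z.of_nat i)%Z) (E ((INR j - INR i) * th))))).
    intros i Hi. apply (cc_Csum L (fun j th => Cmult (a (Z.of_nat j - Z.of_nat i)%Z) (E ((INR j - INR i) * th)))).
    intros j Hj. apply cc_mult. apply cc_const. apply cc_E. apply cont_mult. apply cont_const. apply cont_id. }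
  exists L, p. split; [auto|]. split; [auto|]. split.
  - intros th Hth.
    assert (Hp1 : p th = Cmult (RtoC (/ (2 * PI * INR L))) (CI (fun t => Cmult (f t) (Gk L th t)))).
    { unfold Gk. rewrite kexp by auto. unfold p. rewrite <- !Csum_mull. apply Csum_ext; intros i Hi.
      rewrite <- !Csum_mull. apply Csum_ext; intros j Hj. rewrite CI_fE by auto. fold a.
      destruct (a (Z.of_nat j - Z.of_nat i)%Z) as [a1 a2]. unfold E, Cmult, RtoC; simpl. f_equal; field; lra. }
    assert (Hf1 : f th = Cmult (RtoC (/ (2 * PI * INR L))) (CI (fun t => Cmult (f th) (Gk L th t)))).
    { rewrite CI_mult by apply cc_Gk. rewrite CI_Gk. destruct (f th) as [b1 b2]. unfold Cmult, RtoC; simpl. f_equal; field; lra. }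
    assert (Hd : Cminus (f th) (p th) = Cmult (RtoC (/ (2 * PI * INR L))) (CI (fun t => Cmult (Cminus (f th) (f t)) (Gk L th t)))).
    { rewrite Hp1. rewrite Hf1 at 1. rewrite (CI_ext (fun t => Cmult (Cminus (f th) (f t)) (Gk L th t))
         (fun t => Cminus (Cmult (f th) (Gk L th t)) (Cmult (f t) (Gk L th t)))) by (intros; cring).
      rewrite CI_minus. cring. apply cc_mult. apply cc_const. apply cc_Gk. apply cc_mult. auto. apply cc_Gk. }
    assert (Hcc : cc (fun t => Cmult (Cminus (f th) (f t)) (Gk L th t))).
    { apply cc_mult. apply cc_minus. apply cc_const. auto. apply cc_Gk. }
    assert (HS : continuity (fun t => Cmod (SL L (th - t)) ^ 2)).
    { apply cont_pow2. apply (cont_Cmod (fun t => SL L (th - t))).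
      destruct (cc_Ytp L one) as [H1 H2]. split. apply (cont_comp (fun t => th - t) (fun u => fst (Ytp L one u))); auto; apply cont_shift.
      apply (cont_comp (fun t => th - t) (fun u => snd (Ytp L one u))); auto; apply cont_shift. }
    assert (HIS : I (fun t => Cmod (SL L (th - t)) ^ 2) = 2 * PI * INR L).
    { rewrite (I_ext _ (fun t => fst (Gk L th t))) by (intros; rewrite Gk_re; auto).
      change (I (fun t => fst (Gk L th t))) with (fst (CI (Gk L th))). rewrite CI_Gk. auto. }
    assert (Hpt : forall t, -PI <= t <= PI -> Cmod (Cmult (Cminus (f th) (f t)) (Gk L th t)) <= eta / 2 * Cmod (SL L (th - t)) ^ 2 + 4 * F0 / kap).
    { intros t Ht. rewrite Cmod_mult, Gk_mod. assert (0 <= Cmod (SL L (th - t)) ^ 2) by apply pow2_ge_0.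
      assert (0 <= 4 * F0 / kap) by (apply Rmult_le_pos; [lra|left; apply Rinv_0_lt_compat; lra]).
      destruct (Rlt_dec (1 - cos (th - t)) kap) as [Hc|Hc].
      - assert (Cmod (Cminus (f th) (f t)) <= eta / 2) by (apply Hu; auto).
        assert (Cmod (Cminus (f th) (f t)) * Cmod (SL L (th - t)) ^ 2 <= eta / 2 * Cmod (SL L (th - t)) ^ 2) by (apply Rmult_le_compat_r; auto).
        lra.
      - assert (Hcos : cos (th - t) < 1) by lra.
        assert (HSb := SL_bound L (th - t) Hcos).
        assert (4 / (2 - 2 * cos (th - t)) <= 2 / kap).
        { apply Rmult_le_reg_r with ((2 - 2 * cos (th - t)) * kap). nra.
          unfold Rdiv. field_simplify; try nra. }
        assert (Hfd : Cmod (Cminus (f th) (f t)) <= 2 * F0).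
        { unfold Cminus. eapply Rle_trans. apply Cmod_triangle. rewrite Cmod_opp.
          assert (Cmod (f th) <= F0) by (apply HMx; auto). assert (Cmod (f t) <= F0) by (apply HMx; auto). lra. }
        assert (Cmod (Cminus (f th) (f t)) * Cmod (SL L (th - t)) ^ 2 <= 2 * F0 * (2 / kap)).
        { apply Rmult_le_compat; auto. apply Cmod_ge_0. lra. }
        assert (0 <= eta / 2 * Cmod (SL L (th - t)) ^ 2) by (apply Rmult_le_pos; lra).
        replace (4 * F0 / kap) with (2 * F0 * (2 / kap)) by (field; lra). lra. }
    rewrite Hd, Cmod_mult, Cmod_R, Rabs_pos_eq by (left; apply Rinv_0_lt_compat; nra).
    eapply Rle_trans. apply Rmult_le_compat_l. left; apply Rinv_0_lt_compat; nra. apply Cmod_CI; auto.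
    eapply Rle_trans. apply Rmult_le_compat_l. left; apply Rinv_0_lt_compat; nra.
    apply (I_le _ (fun t => eta / 2 * Cmod (SL L (th - t)) ^ 2 + 4 * F0 / kap)). apply cont_Cmod; auto.
    apply cont_plus. apply cont_mult; auto. apply cont_const. apply cont_const. exact Hpt.
    rewrite I_plus, I_scal, I_const, HIS; auto. 2: apply cont_mult; auto; apply cont_const. 2: apply cont_const.
    assert (H8 : 8 * F0 <= kap * eta * INR L).
    { assert (H : 8 * F0 / (kap * eta) <= INR L) by lra. apply Rmult_le_compat_r with (r := kap * eta) in H; [|nra].
      unfold Rdiv in H. rewrite Rmult_assoc, Rinv_l in H by nra. nra. }
    replace (/ (2 * PI * INR L) * (eta / 2 * (2 * PI * INR L) + 2 * PI * (4 * F0 / kap))) with (eta / 2 + 4 * F0 / (kap * INR L)) by (field; repeat split; lra).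
    assert (4 * F0 / (kap * INR L) <= eta / 2).
    { apply Rmult_le_reg_r with (kap * INR L). nra. unfold Rdiv. rewrite Rmult_assoc, Rinv_l by nra. lra. }
    lra.
  - intros k Hkk. rewrite fourier_CI by auto.
    rewrite (CI_ext _ (fun t => Csum L (fun i => Csum L (fun j => Cmult (Cmult (RtoC (/ INR L)) (a (Z.of_nat j - Z.of_nat i)%Z)) (E (- (IZR (k - (Z.of_nat j - Z.of_nat i)) * t))))))).
    + rewrite (CI_Csum L (fun i t => Csum L (fun j => Cmult (Cmult (RtoC (/ INR L)) (a (Z.of_nat j - Z.of_nat i)%Z)) (E (- (IZR (k - (Z.of_nat j - Z.of_nat i)) * t)))))).
      rewrite (Csum_ext L _ (fun _ => RtoC 0)). rewrite Csum_zero. cring.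
      intros i Hi. rewrite (CI_Csum L (fun j t => Cmult (Cmult (RtoC (/ INR L)) (a (Z.of_nat j - Z.of_nat i)%Z)) (E (- (IZR (k - (Z.of_nat j - Z.of_nat i)) * t))))).
      rewrite (Csum_ext L _ (fun _ => RtoC 0)). apply Csum_zero.
      intros j Hj. rewrite CI_mult, CI_Eneg. destruct (Z.eqb_spec (k - (Z.of_nat j - Z.of_nat i)) 0). lia. cring.
      apply cc_E. apply cont_opp, cont_mult. apply cont_const. apply cont_id.
      intros j Hj. apply cc_mult. apply cc_const. apply cc_E. apply cont_opp, cont_mult. apply cont_const. apply cont_id.
      intros i Hi. apply (cc_Csum L (fun j t => Cmult (Cmult (RtoC (/ INR L)) (a (Z.of_nat j - Z.of_nat i)%Z)) (E (- (IZR (k - (Z.of_nat j - Z.of_nat i)) * t))))).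
      intros j Hj. apply cc_mult. apply cc_const. apply cc_E. apply cont_opp, cont_mult. apply cont_const. apply cont_id.
    + intros t _. unfold p. rewrite <- Csum_mull, <- Csum_mulr. apply Csum_ext; intros i Hi.
      rewrite <- Csum_mull, <- Csum_mulr. apply Csum_ext; intros j Hj.
      rewrite (E_eq (- (IZR (k - (Z.of_nat j - Z.of_nat i)) * t)) ((INR j - INR i) * t + - (IZR k * t))).
      rewrite E_add. cring. rewrite !minus_IZR, <- !INR_IZR_INZ. ring. Qed.

Lemma fourier_plus g h k : cc g -> cc h -> fourier (fun t => Cplus (g t) (h t)) k = Cplus (fourier g k) (fourier h k).
Proof. intros Hg Hh. rewrite !fourier_CI; auto. 2: apply cc_plus; auto.
  rewrite (CI_ext _ (fun t => Cplus (Cmult (g t) (E (- (IZR k * t)))) (Cmult (h t) (E (- (IZR k * t)))))) by (intros; cring).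
  rewrite CI_plus. cring. all: apply cc_mult; auto; apply cc_E; apply cont_opp, cont_mult; [apply cont_const|apply cont_id]. Qed.

Lemma circM_plus n a b : circM n (fun k => Cplus (a k) (b k)) = madd (circM n a) (circM n b).
Proof. apply functional_extensionality; intro i; apply functional_extensionality; intro j.
  unfold circM, madd, ccoef. set (d := Z.to_nat _).
  destruct (a (Z.of_nat d)), (b (Z.of_nat d)), (a (Z.of_nat d - Z.of_nat n)%Z), (b (Z.of_nat d - Z.of_nat n)%Z).
  unfold Cscale, Cadd, Cplus; simpl. f_equal; ring. Qed.
Lemma toepM_plus a b : toepM (fun k => Cplus (a k) (b k)) = madd (toepM a) (toepM b).
Proof. reflexivity. Qed.

Lemma count_window n a w mu : 0 <= mu ->
  Rsumn n (fun j => if andb (Nat.leb a j) (Nat.ltb j (a + w)) then mu else 0) <= INR w * mu.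
Proof. intros Hmu. assert (H : forall n, Rsumn n (fun j => if andb (Nat.leb a j) (Nat.ltb j (a + w)) then mu else 0) = INR (Nat.min n (a + w) - Nat.min n a) * mu).
  { induction n0. simpl. ring. simpl Rsumn. rewrite IHn0.
    destruct (Nat.leb_spec a n0); destruct (Nat.ltb_spec n0 (a + w)); simpl andb.
    - replace (Nat.min (S n0) (a + w) - Nat.min (S n0) a)%nat with (S (Nat.min n0 (a + w) - Nat.min n0 a)) by lia. rewrite S_INR. ring.
    - replace (Nat.min (S n0) (a + w) - Nat.min (S n0) a)%nat with (Nat.min n0 (a + w) - Nat.min n0 a)%nat by lia. ring.
    - replace (Nat.min (S n0) (a + w) - Nat.min (S n0) a)%nat with (Nat.min n0 (a + w) - Nat.min n0 a)%nat by lia. ring.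
    - replace (Nat.min (S n0) (a + w) - Nat.min (S n0) a)%nat with (Nat.min n0 (a + w) - Nat.min n0 a)%nat by lia. ring. }
  rewrite H. apply Rmult_le_compat_r; auto. apply le_INR. lia. Qed.

Lemma band_sum n i L mu g : 0 <= mu -> (forall j, (j < n)%nat -> 0 <= g j) ->
  (forall j, (j < n)%nat -> g j <= if andb (Nat.ltb i (j + L)) (Nat.ltb j (i + L)) then mu else 0) ->
  Rsumn n g <= INR (2 * L) * mu.
Proof. intros Hmu Hg0 Hg. eapply Rle_trans; [|apply (count_window n (i + 1 - L) (2 * L) mu Hmu)].
  apply Rsumn_le. intros j Hj. eapply Rle_trans. apply Hg; auto.
  destruct (i <? j + L) eqn:E1; destruct (j <? i + L) eqn:E2; destruct (i + 1 - L <=? j) eqn:E3;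
  destruct (j <? i + 1 - L + 2 * L) eqn:E4; simpl andb; cbv iota; try lra; exfalso;
  rewrite ?Nat.ltb_lt, ?Nat.ltb_ge, ?Nat.leb_le, ?Nat.leb_gt in *; lia. Qed.

Lemma circM_ge n b i j : (j <= i)%nat -> (i < n)%nat -> circM n b i j = ccoef n b (i - j).
Proof. intros. unfold circM. f_equal. rewrite Z.mod_small by lia. lia. Qed.
Lemma circM_lt n b i j : (i < j)%nat -> (j < n)%nat -> circM n b i j = ccoef n b (n + i - j).
Proof. intros. unfold circM. f_equal.
  replace ((Z.of_nat i - Z.of_nat j) mod Z.of_nat n)%Z with (Z.of_nat i - Z.of_nat j + Z.of_nat n)%Z. lia.
  rewrite <- (Z_mod_plus_full (Z.of_nat i - Z.of_nat j) 1). rewrite Z.mod_small; lia. Qed.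

Lemma Cmod_Cscale r z : Cmod (Cscale r z) = Rabs r * Cmod z.
Proof. rewrite Cscale_eq, Cmod_mult, Cmod_R. auto. Qed.

Definition midc n L j := andb (Nat.leb L j) (Nat.ltb (j + L) n).

Lemma D_entry_bound n L b C i j : (0 < n)%nat -> (i < n)%nat -> (j < n)%nat -> midc n L j = true ->
  (forall k, (Z.of_nat L <= Z.abs k)%Z -> b k = RtoC 0) -> (forall k, Cmod (b k) <= C) -> 0 <= C ->
  Cmod (msub (circM n b) (toepM b) i j) <= if andb (Nat.ltb i (j + L)) (Nat.ltb j (i + L)) then INR L * C / INR n else 0.
Proof. intros Hn Hi Hj Hm Hb HC HC0. unfold midc in Hm. apply Bool.andb_true_iff in Hm. destruct Hm as [Hm1 Hm2].
  apply Nat.leb_le in Hm1. apply Nat.ltb_lt in Hm2. assert (Hn' : 0 < INR n) by (apply lt_0_INR; lia).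
  assert (Hmu : 0 <= INR L * C / INR n) by (apply Rmult_le_pos; [apply Rmult_le_pos; [apply pos_INR|auto]|left; apply Rinv_0_lt_compat; auto]).
  unfold msub, toepM. destruct (le_lt_dec j i) as [Hji|Hij].
  - rewrite circM_ge by auto. unfold ccoef.
    rewrite (Hb (Z.of_nat (i - j) - Z.of_nat n)%Z) by lia.
    replace (Z.of_nat i - Z.of_nat j)%Z with (Z.of_nat (i - j)) by lia.
    assert (HD : Cminus (Cscale (1 / INR n) (Cadd (Cscale (INR (n - (i - j))) (b (Z.of_nat (i - j)))) (Cscale (INR (i - j)) (RtoC 0)))) (b (Z.of_nat (i - j)))
      = Cscale (- INR (i - j) / INR n) (b (Z.of_nat (i - j)))).
    { destruct (b (Z.of_nat (i - j))) as [x y]. rewrite minus_INR by lia. unfold Cscale, Cadd, Cminus, Cplus, Complex.Copp, RtoC; simpl. f_equal; field; lra. }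
    rewrite HD, Cmod_Cscale. destruct (lt_dec (i - j) L) as [Hd|Hd].
    + destruct (Nat.ltb_spec i (j + L)); destruct (Nat.ltb_spec j (i + L)); simpl andb; cbv iota; try lia.
      rewrite Rabs_left1. 2: { unfold Rdiv. assert (0 <= INR (i - j)) by apply pos_INR. assert (0 < / INR n) by (apply Rinv_0_lt_compat; lra). nra. }
      assert (INR (i - j) <= INR L) by (apply le_INR; lia). assert (0 <= INR (i - j)) by apply pos_INR.
      assert (Hbc := HC (Z.of_nat (i - j))). assert (0 <= Cmod (b (Z.of_nat (i - j)))) by apply Cmod_ge_0.
      unfold Rdiv. replace (- (- INR (i - j) * / INR n)) with (INR (i - j) * / INR n) by ring.
      assert (0 < / INR n) by (apply Rinv_0_lt_compat; lra).
      replace (INR L * C * / INR n) with (INR L * / INR n * C) by ring.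
      apply Rmult_le_compat; try nra.
    + rewrite (Hb (Z.of_nat (i - j))) by lia. rewrite Cmod_0, Rmult_0_r. destruct (_ && _)%bool; lra.
  - rewrite circM_lt by auto. unfold ccoef.
    rewrite (Hb (Z.of_nat (n + i - j))) by lia.
    replace (Z.of_nat (n + i - j) - Z.of_nat n)%Z with (Z.of_nat i - Z.of_nat j)%Z by lia.
    assert (HD : Cminus (Cscale (1 / INR n) (Cadd (Cscale (INR (n - (n + i - j))) (RtoC 0)) (Cscale (INR (n + i - j)) (b (Z.of_nat i - Z.of_nat j)%Z)))) (b (Z.of_nat i - Z.of_nat j)%Z)
      = Cscale (- INR (j - i) / INR n) (b (Z.of_nat i - Z.of_nat j)%Z)).
    { destruct (b (Z.of_nat i - Z.of_nat j)%Z) as [x y]. rewrite !minus_INR by lia. rewrite plus_INR.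
      unfold Cscale, Cadd, Cminus, Cplus, Complex.Copp, RtoC; simpl. f_equal; field; lra. }
    rewrite HD, Cmod_Cscale. destruct (lt_dec (j - i) L) as [Hd|Hd].
    + destruct (Nat.ltb_spec i (j + L)); destruct (Nat.ltb_spec j (i + L)); simpl andb; cbv iota; try lia.
      rewrite Rabs_left1. 2: { unfold Rdiv. assert (0 <= INR (j - i)) by apply pos_INR. assert (0 < / INR n) by (apply Rinv_0_lt_compat; lra). nra. }
      assert (INR (j - i) <= INR L) by (apply le_INR; lia). assert (0 <= INR (j - i)) by apply pos_INR.
      assert (Hbc := HC (Z.of_nat i - Z.of_nat j)%Z). assert (0 <= Cmod (b (Z.of_nat i - Z.of_nat j)%Z)) by apply Cmod_ge_0.
      unfold Rdiv. replace (- (- INR (j - i) * / INR n)) with (INR (j - i) * / INR n) by ring.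
      assert (0 < / INR n) by (apply Rinv_0_lt_compat; lra).
      replace (INR L * C * / INR n) with (INR L * / INR n * C) by ring.
      apply Rmult_le_compat; try nra.
    + rewrite (Hb (Z.of_nat i - Z.of_nat j)%Z) by lia. rewrite Cmod_0, Rmult_0_r. destruct (_ && _)%bool; lra. Qed.

Lemma Dp_decomp n L b C : (0 < n)%nat -> (forall k, (Z.of_nat L <= Z.abs k)%Z -> b k = RtoC 0) ->
  (forall k, Cmod (b k) <= C) -> 0 <= C ->
  exists Rm Em, meq n (msub (circM n b) (toepM b)) (madd Rm Em) /\ rank_le n Rm (2 * L) /\
    spec_norm_le n Em (INR (2 * L) * (INR L * C / INR n)).
Proof. intros Hn Hb HC HC0. set (D := msub (circM n b) (toepM b)).
  exists (fun i j => if midc n L j then RtoC 0 else D i j), (fun i j => if midc n L j then D i j else RtoC 0).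
  assert (Hn' : 0 < INR n) by (apply lt_0_INR; lia).
  assert (Hmu : 0 <= INR L * C / INR n) by (apply Rmult_le_pos; [apply Rmult_le_pos; [apply pos_INR|auto]|left; apply Rinv_0_lt_compat; auto]).
  split; [|split].
  - intros i j _ _. unfold madd. destruct (midc n L j); destruct (D i j); unfold Cplus, RtoC; simpl; f_equal; ring.
  - apply rank_colsupp with (s := fun l => if Nat.ltb l L then l else (n + l - 2 * L)%nat).
    intros j Hj. destruct (midc n L j) eqn:Hm.
    + right. intros; auto.
    + left. unfold midc in Hm. apply Bool.andb_false_iff in Hm. destruct (lt_dec j L).
      * exists j. split. lia. destruct (Nat.ltb_spec j L); lia.
      * exists (j + 2 * L - n)%nat. destruct Hm as [Hm|Hm]; [apply Nat.leb_gt in Hm|apply Nat.ltb_ge in Hm]; try lia.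
        split. lia. destruct (Nat.ltb_spec (j + 2 * L - n) L); lia.
  - apply qb_spec. apply Rmult_le_pos; auto. apply pos_INR. apply qb_schur.
    + intros i Hi. apply (band_sum n i L). auto. intros; apply Cmod_ge_0. intros j Hj.
      destruct (midc n L j) eqn:Hm. apply D_entry_bound; auto. rewrite Cmod_0. destruct (_ && _)%bool; lra.
    + intros j Hj. apply (band_sum n j L). auto. intros; apply Cmod_ge_0. intros i Hi.
      destruct (midc n L j) eqn:Hm.
      * eapply Rle_trans. apply D_entry_bound; eauto.
        destruct (Nat.ltb_spec i (j + L)); destruct (Nat.ltb_spec j (i + L)); destruct (Nat.ltb_spec j (i + L)); destruct (Nat.ltb_spec i (j + L)); simpl; lra.
      * rewrite Cmod_0. destruct (_ && _)%bool; lra. Qed.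

Lemma msub_eq A B : msub A B = madd A (mscal (RtoC (-1)) B).
Proof. apply functional_extensionality; intro i; apply functional_extensionality; intro j.
  unfold msub, madd, mscal. cring. Qed.
Lemma spec_neg n A a : 0 <= a -> spec_norm_le n A a -> spec_norm_le n (mscal (RtoC (-1)) A) a.
Proof. intros. replace a with (Cmod (RtoC (-1)) * a). apply spec_scal; auto.
  rewrite Cmod_R. replace (Rabs (-1)) with 1 by (unfold Rabs; destruct Rcase_abs; lra). ring. Qed.
Lemma spec_msub n A B a b : 0 <= a -> 0 <= b -> spec_norm_le n A a -> spec_norm_le n B b -> spec_norm_le n (msub A B) (a + b).
Proof. intros. rewrite msub_eq. apply spec_add; auto. apply spec_neg; auto. Qed.

Lemma partial_sub_eq n X Z K : msub (mcos_partial n X K) (mcos_partial n Z K) = msum (S K) (fun m => mscal (RtoC (wc m)) (pdiff n X Z (2 * m))).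
Proof. rewrite !mcos_partial_eq. apply functional_extensionality; intro i; apply functional_extensionality; intro j.
  unfold msub, msum. rewrite <- Csum_minus. apply Csum_ext; intros. unfold cterm, mscal, pdiff, msub. cring. Qed.

Lemma rank_partial n X Z K R r : meq n (msub X Z) R -> rank_le n R r ->
  rank_le n (msub (mcos_partial n X K) (mcos_partial n Z K)) (S K * (2 * K * r)).
Proof. intros HR Hr. rewrite partial_sub_eq. apply rank_msum. intros m Hm. apply rank_scal.
  apply rank_mono with (2 * m * r)%nat. apply Nat.mul_le_mono_r. lia. apply rank_pdiff with R; auto. Qed.

Definition cKc B K := Rsumn (S K) (fun m => / INR (fact (2 * m)) * (INR (2 * m) * B ^ (2 * m))).
Lemma cKc_nonneg B K : 0 <= B -> 0 <= cKc B K.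
Proof. intros. apply Rsumn_nonneg. intros. apply Rmult_le_pos. left; apply Rinv_0_lt_compat, lt_0_INR, lt_O_fact.
  apply Rmult_le_pos. apply pos_INR. apply pow_le; auto. Qed.

Lemma spec_partial_sub n X Z B e K : 1 <= B -> 0 <= e -> spec_norm_le n X B -> spec_norm_le n Z B ->
  spec_norm_le n (msub X Z) e -> spec_norm_le n (msub (mcos_partial n X K) (mcos_partial n Z K)) (cKc B K * e).
Proof. intros HB He HX HZ HE. rewrite partial_sub_eq. unfold cKc. rewrite Rmult_comm, <- Rsumn_scal.
  rewrite (Rsumn_ext _ _ (fun m => Cmod (RtoC (wc m)) * (INR (2 * m) * B ^ (2 * m) * e))).
  apply spec_msum. intros m Hm. split. apply Rmult_le_pos. apply Cmod_ge_0. apply Rmult_le_pos; auto.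
  apply Rmult_le_pos. apply pos_INR. apply pow_le; lra.
  apply spec_scal. apply Rmult_le_pos; auto. apply Rmult_le_pos. apply pos_INR. apply pow_le; lra.
  apply spec_pdiff; auto.
  intros m Hm. rewrite Cmod_wc. ring. Qed.

Theorem mainTheorem9 (f : R -> Cpx) (hf : in_C2pi f) :
  forall eps : R, 0 < eps ->
  exists N M : nat, (0 < N)%nat /\ (0 < M)%nat /\
  forall n : nat, (N < n)%nat ->
    exists Rn En : mat,
      (forall i j, (i < n)%nat -> (j < n)%nat ->
         Csub (mcos n (opt_circ n f) i j) (mcos n (toeplitz n f) i j)
         = Cadd (Rn i j) (En i j)) /\
      rank_le n Rn (2 * M) /\
      spec_norm_le n En eps.
Proof.
  intros eps Heps. destruct hf as [Hc1 [Hc2 Hper]].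
  assert (Hf : cc f) by (split; auto). assert (Hp : periodic f) by exact Hper.
  assert (HP : 0 < PI) by apply PI_pos.
  destruct (continuity_ab_maj (fun t => Cmod (f t)) (-PI) PI ltac:(lra) (fun c _ => cont_Cmod f Hf c)) as [Mx [HMx _]].
  set (F0 := Cmod (f Mx)). assert (HF0 : 0 <= F0) by apply Cmod_ge_0.
  assert (HFb : forall t, -PI <= t <= PI -> Cmod (f t) <= F0) by (intros; apply HMx; auto).
  set (B := F0 + 2). assert (HB1 : 1 <= B) by (unfold B; lra).
  destruct (nat_unbounded (B ^ 2)) as [K0 HK0].
  destruct (vv_lim B (eps / 16) ltac:(lra)) as [N1 HN1].
  set (K := Nat.max (Nat.max K0 N1) 1).
  assert (HKK0 : (K0 <= K)%nat) by (unfold K; lia). assert (HK1 : (1 <= K)%nat) by (unfold K; lia).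
  assert (Htau : 2 * vv B (S K) <= eps / 8) by (assert (vv B (S K) < eps / 16) by (apply HN1; unfold K; lia); lra).
  assert (Htau0 : 0 <= vv B (S K)) by (apply vv_nonneg; lra).
  set (cK := cKc B K). assert (HcK : 0 <= cK) by (apply cKc_nonneg; lra).
  set (e := Rmin 1 (eps / (4 * (cK + 1)))).
  assert (He0 : 0 < e) by (unfold e; apply Rmin_glb_lt; [lra|apply Rdiv_lt_0_compat; lra]).
  assert (He1 : e <= 1) by (unfold e; apply Rmin_l).
  assert (HcKe : cK * e <= eps / 4).
  { assert (e <= eps / (4 * (cK + 1))) by (unfold e; apply Rmin_r).
    apply Rle_trans with (cK * (eps / (4 * (cK + 1)))). apply Rmult_le_compat_l; auto.
    apply Rmult_le_reg_r with (4 * (cK + 1)). lra. unfold Rdiv. field_simplify; try nra. }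
  set (eta := e / 4). assert (Heta : 0 < eta) by (unfold eta; lra).
  destruct (fejer f Hf Hp eta Heta) as [L [p [HL1 [Hcp [Happ Hfz]]]]].
  set (b := fourier p). set (C0 := F0 + eta). assert (HC0 : 0 <= C0) by (unfold C0; lra).
  assert (Hbb : forall k, Cmod (b k) <= C0).
  { intros k. apply fourier_bound; auto. intros t Ht.
    replace (p t) with (Cminus (f t) (Cminus (f t) (p t))) by cring.
    unfold Cminus at 1. eapply Rle_trans. apply Cmod_triangle. rewrite Cmod_opp.
    assert (H1 := HFb t Ht). assert (H2 := Happ t Ht). unfold C0. lra. }
  set (g := fun t => Cminus (f t) (p t)).
  assert (Hcg : cc g) by (apply cc_minus; auto).
  assert (Hgb : forall t, -PI <= t <= PI -> Cmod (g t) <= eta) by (intros; apply Happ; auto).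
  assert (Ha : fourier f = fun k => Cplus (fourier g k) (b k)).
  { apply functional_extensionality; intro k. unfold b. rewrite <- fourier_plus by auto. f_equal.
    apply functional_extensionality; intro t. unfold g. cring. }
  assert (HL1r : 1 <= INR L) by (apply (le_INR 1); auto).
  destruct (nat_unbounded (4 * INR L * INR L * C0 / e)) as [N2 HN2].
  exists (Nat.max N2 1), (S K * (2 * K) * L)%nat. split; [lia|]. split.
  { apply Nat.mul_pos_pos. apply Nat.mul_pos_pos; lia. lia. }
  intros n Hn. assert (Hn0 : (0 < n)%nat) by lia. assert (Hnr : 0 < INR n) by (apply lt_0_INR; lia).
  assert (HnN : INR N2 <= INR n) by (apply le_INR; lia).
  set (Y := toepM (fourier f)). set (X := circM n (fourier f)).
  change (opt_circ n f) with X. change (toeplitz n f) with Y.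
  assert (HY : spec_norm_le n Y F0) by (apply qb_spec; auto; apply toep_qb; auto).
  assert (HX : spec_norm_le n X F0) by (apply qb_spec; auto; apply circ_qb; auto; apply toep_qb; auto).
  set (Dg := msub (circM n (fourier g)) (toepM (fourier g))).
  assert (HDg : spec_norm_le n Dg (eta + eta)).
  { apply spec_msub; try lra; apply qb_spec; try lra. apply circ_qb; auto. apply toep_qb; auto. apply toep_qb; auto. }
  assert (Hbz : forall k, (Z.of_nat L <= Z.abs k)%Z -> b k = RtoC 0) by (intros; apply Hfz; auto).
  destruct (Dp_decomp n L b C0 Hn0 Hbz Hbb HC0) as [Rm [Em [HDm [HRm HEm]]]].
  assert (HEm' : spec_norm_le n Em (e / 2)).
  { eapply spec_mono; [|exact HEm]. rewrite mult_INR. simpl (INR 2).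
    assert (H4 : 4 * INR L * INR L * C0 <= e * INR n).
    { assert (H := Rle_trans _ _ _ HN2 HnN). apply Rmult_le_compat_r with (r := e) in H; [|lra].
      unfold Rdiv in H. rewrite Rmult_assoc, Rinv_l in H by lra. nra. }
    apply Rmult_le_reg_r with (INR n); auto. unfold Rdiv. rewrite !Rmult_assoc, Rinv_l by lra. nra. }
  set (Z := madd Y (madd Dg Em)).
  assert (HZY : spec_norm_le n (msub Z Y) e).
  { apply (spec_meq n (madd Dg Em)). intros i j _ _. unfold Z, msub, madd. cring.
    replace e with ((eta + eta) + e / 2) by (unfold eta; lra). apply spec_add; auto; lra. }
  assert (HZ : spec_norm_le n Z B).
  { apply spec_mono with (F0 + ((eta + eta) + e / 2)). unfold B, eta; lra.
    unfold Z. apply spec_add; auto; try lra. apply spec_add; auto; lra. }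
  assert (HXB : spec_norm_le n X B) by (apply spec_mono with F0; auto; unfold B; lra).
  assert (HYB : spec_norm_le n Y B) by (apply spec_mono with F0; auto; unfold B; lra).
  assert (HXZ : meq n (msub X Z) Rm).
  { intros i j Hi Hj. assert (H1 := HDm i j Hi Hj). unfold msub, madd, Z, X, Y, Dg in *. rewrite Ha. rewrite circM_plus.
    unfold madd, toepM, msub in *.
    replace (Rm i j) with (Cminus (Cminus (circM n b i j) (b (Z.of_nat i - Z.of_nat j)%Z)) (Em i j)) by (rewrite H1; cring).
    cring. }
  set (Rn := msub (mcos_partial n X K) (mcos_partial n Z K)).
  set (En := fun i j => Csub (Csub (mcos n X i j) (mcos n Y i j)) (Rn i j)).
  exists Rn, En. split; [|split].
  - intros i j Hi Hj. unfold En. cring.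
  - replace (2 * (S K * (2 * K) * L))%nat with (S K * (2 * K * (2 * L)))%nat by ring.
    apply rank_partial with Rm; auto.
  - set (TX := msub (mcos n X) (mcos_partial n X K)). set (TZ := msub (mcos n Z) (mcos_partial n Z K)).
    set (TY := msub (mcos n Y) (mcos_partial n Y K)). set (PZY := msub (mcos_partial n Z K) (mcos_partial n Y K)).
    assert (HTX : spec_norm_le n TX (2 * vv B (S K))) by (apply mcos_tail with K0; auto; lra).
    assert (HTZ : spec_norm_le n TZ (2 * vv B (S K))) by (apply mcos_tail with K0; auto; lra).
    assert (HTY : spec_norm_le n TY (2 * vv B (S K))) by (apply mcos_tail with K0; auto; lra).
    assert (HPZY : spec_norm_le n PZY (cK * e)) by (apply spec_partial_sub; auto; lra).
    apply (spec_meq n (madd (msub TX TZ) (madd PZY (msub TZ TY)))).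
    { intros i j _ _. unfold En, Rn, TX, TZ, TY, PZY, msub, madd. cring. }
    apply spec_mono with ((2 * vv B (S K) + 2 * vv B (S K)) + (cK * e + (2 * vv B (S K) + 2 * vv B (S K)))). lra.
    apply spec_add; try lra. nra. apply spec_msub; auto; lra.
    apply spec_add; auto; try nra. apply spec_msub; auto; lra. Qed.
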